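(* Let $U$ be the open unit disc centred at the origin of $\mathbb{R}^2$, $f\colon\partial U\to\mathbb{R}$, and suppose $G_f(t)=f(e^{it})$ is Laplace integrable on $[-\pi,\pi]$. Then for every $(r,\theta)\in[0,1)\times[-\pi,\pi]$ the Laplace integral \[F(r,\theta)=\frac{1}{2\pi}\int_{-\pi}^{\pi}G_f(t)P_r(\theta-t)\,dt,\qquad P_r(u)=\frac{1-r^2}{1-2r\cos u+r^2},\] is well defined, and the function $re^{i\theta}\mapsto F(r,\theta)$ is harmonic on $U$.
   Context: Laplace integral on $[a,b]$: with lower/upper Laplace derivates $\underline{LD}_1F(x)$, $\overline{LD}_1F(x)$ being the minimum of the $\liminf$'s, resp. maximum of the $\limsup$'s, as $s\to\infty$ of $s^2\int_0^\delta e^{-st}[F(x+t)-F(x)]dt$ and $(-s^2)\int_0^\delta e^{-st}[F(x-t)-F(x)]dt$ (one-sided at endpoints), a major function of $h$ is a continuous $W$ with $\underline{LD}_1W\geqslant h$, $\underline{LD}_1W>-\infty$ everywhere on $[a,b]$, a minor function a continuous $V$ with $\overline{LD}_1V\leqslant h$, $\overline{LD}_1V<\infty$ everywhere, and $h$ is Laplace integrable if $\sup_V(V(b)-V(a))=\inf_W(W(b)-W(a))$ is finite, the value being $\int_a^bh$. *)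

(* Defs.v *)
From Stdlib Require Import Reals Lra.
From Coquelicot Require Import Coquelicot.
Open Scope R_scope.

Definition liminf_pinfty (g : R -> R) : Rbar :=
  Rbar_lub (fun y => exists M : R, y = Glb_Rbar (fun z => exists s, M <= s /\ z = g s)).
Definition limsup_pinfty (g : R -> R) : Rbar :=
  Rbar_glb (fun y => exists M : R, y = Lub_Rbar (fun z => exists s, M <= s /\ z = g s)).

Definition Rbar_max2 (x y : Rbar) : Rbar :=
  Rbar_opp (Rbar_min (Rbar_opp x) (Rbar_opp y)).

Definition laplace_right (F : R -> R) (x delta : R) (s : R) : R :=
  s ^ 2 * RInt (fun t => exp (- (s * t)) * (F (x + t) - F x)) 0 delta.
Definition laplace_left (F : R -> R) (x delta : R) (s : R) : R :=
  (- s ^ 2) * RInt (fun t => exp (- (s * t)) * (F (x - t) - F x)) 0 delta.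

(** Lower / upper Laplace derivates of F at x relative to [a,b]; at interior
    points both sides are used (min of liminfs / max of limsups), at the
    endpoints only the one-sided one.  delta is taken as the distance to the
    relevant endpoint (the value does not depend on delta > 0 for continuous F). *)
Definition lower_LD (a b : R) (F : R -> R) (x : R) : Rbar :=
  match Rlt_dec a x, Rlt_dec x b with
  | left _, left _ => Rbar_min (liminf_pinfty (laplace_right F x (b - x)))
                               (liminf_pinfty (laplace_left F x (x - a)))
  | right _, _ => liminf_pinfty (laplace_right F x (b - x))
  | left _, right _ => liminf_pinfty (laplace_left F x (x - a))
  end.
Definition upper_LD (a b : R) (F : R -> R) (x : R) : Rbar :=
  match Rlt_dec a x, Rlt_dec x b with
  | left _, left _ => Rbar_max2 (limsup_pinfty (laplace_right F x (b - x)))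
                               (limsup_pinfty (laplace_left F x (x - a)))
  | right _, _ => limsup_pinfty (laplace_right F x (b - x))
  | left _, right _ => limsup_pinfty (laplace_left F x (x - a))
  end.

Definition continuous_on_cc (a b : R) (F : R -> R) : Prop :=
  forall x, a <= x <= b ->
    filterlim F (within (fun y => a <= y <= b) (locally x)) (locally (F x)).

Definition major_function (a b : R) (h W : R -> R) : Prop :=
  continuous_on_cc a b W /\
  forall x, a <= x <= b ->
    Rbar_le (Finite (h x)) (lower_LD a b W x) /\ lower_LD a b W x <> m_infty.

Definition minor_function (a b : R) (h V : R -> R) : Prop :=
  continuous_on_cc a b V /\
  forall x, a <= x <= b ->
    Rbar_le (upper_LD a b V x) (Finite (h x)) /\ upper_LD a b V x <> p_infty.

Definition is_laplace_integral (h : R -> R) (a b I : R) : Prop :=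
  is_lub_Rbar (fun v => exists V, minor_function a b h V /\ v = V b - V a) (Finite I) /\
  is_glb_Rbar (fun w => exists W, major_function a b h W /\ w = W b - W a) (Finite I).

Definition laplace_integrable (h : R -> R) (a b : R) : Prop :=
  exists I, is_laplace_integral h a b I.

Definition poisson (r u : R) : R := (1 - r ^ 2) / (1 - 2 * r * cos u + r ^ 2).

Definition unit_disc (x y : R) : Prop := x ^ 2 + y ^ 2 < 1.

Definition dx (u : R -> R -> R) (x y : R) : R := Derive (fun t => u t y) x.
Definition dy (u : R -> R -> R) (x y : R) : R := Derive (fun t => u x t) y.

Definition harmonic_on (D : R -> R -> Prop) (u : R -> R -> R) : Prop :=
  forall x y, D x y ->
    ex_derive (fun t => u t y) x /\ ex_derive (fun t => u x t) y /\
    ex_derive (fun t => dx u t y) x /\ ex_derive (fun t => dx u x t) y /\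
    ex_derive (fun t => dy u t y) x /\ ex_derive (fun t => dy u x t) y /\
    continuous (fun p : R * R => dx (dx u) (fst p) (snd p)) (x, y) /\
    continuous (fun p : R * R => dy (dx u) (fst p) (snd p)) (x, y) /\
    continuous (fun p : R * R => dx (dy u) (fst p) (snd p)) (x, y) /\
    continuous (fun p : R * R => dy (dy u) (fst p) (snd p)) (x, y) /\
    dx (dx u) x y + dy (dy u) x y = 0.

(* Main.v *)
Require Import Defs.
From Stdlib Require Import Reals Lra Classical ClassicalEpsilon FunctionalExtensionality.
From Coquelicot Require Import Coquelicot.
Open Scope R_scope.

Lemma liminf_ev (g : R -> R) (c c' : R) :
  Rbar_le (Finite c) (liminf_pinfty g) -> c' < c ->
  exists M, forall s, M <= s -> c' < g s.
Proof.
  intros Hc Hc'.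
  destruct (classic (exists M, forall s, M <= s -> c' < g s)) as [H|H]; [exact H|].
  exfalso.
  assert (Hub : Rbar_le (liminf_pinfty g) (Finite c')).
  { unfold liminf_pinfty. unfold Rbar_lub.
    destruct (Rbar_ex_lub _) as [l [Hl1 Hl2]]; cbn [proj1_sig].
    apply Hl2. intros y [M ->].
    destruct (Glb_Rbar_correct (fun z => exists s, M <= s /\ z = g s)) as [G1 G2].
    destruct (not_all_ex_not _ _ (fun H' => H (ex_intro _ M H'))) as [s Hs].
    apply imply_to_and in Hs. destruct Hs as [Hs1 Hs2].
    eapply Rbar_le_trans. apply G1. exists s. split; [exact Hs1|reflexivity].
    simpl. lra. }
  pose proof (Rbar_le_trans _ _ _ Hc Hub). simpl in H0. lra.
Qed.

Lemma liminf_ge (g : R -> R) (c : R) :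
  (forall c', c' < c -> exists M, forall s, M <= s -> c' <= g s) ->
  Rbar_le (Finite c) (liminf_pinfty g).
Proof.
  intros H.
  assert (Hc : forall c', c' < c -> Rbar_le (Finite c') (liminf_pinfty g)).
  { intros c' Hc'. destruct (H c' Hc') as [M HM].
    unfold liminf_pinfty, Rbar_lub.
    destruct (Rbar_ex_lub _) as [l [Hl1 Hl2]]; cbn [proj1_sig].
    eapply Rbar_le_trans; [|apply Hl1; exists M; reflexivity].
    destruct (Glb_Rbar_correct (fun z => exists s, M <= s /\ z = g s)) as [G1 G2].
    apply G2. intros z [s [Hs ->]]. simpl. apply HM. exact Hs. }
  destruct (liminf_pinfty g) as [l| |] eqn:E; simpl; auto.
  - destruct (Rle_lt_dec c l) as [h|h]; [exact h|].
    specialize (Hc ((l + c)/2) ltac:(lra)). simpl in Hc. lra.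
  - specialize (Hc (c - 1) ltac:(lra)). simpl in Hc. exact Hc.
Qed.

Lemma limsup_ev (g : R -> R) (c c' : R) :
  Rbar_le (limsup_pinfty g) (Finite c) -> c < c' ->
  exists M, forall s, M <= s -> g s < c'.
Proof.
  intros Hc Hc'.
  destruct (classic (exists M, forall s, M <= s -> g s < c')) as [H|H]; [exact H|].
  exfalso.
  assert (Hub : Rbar_le (Finite c') (limsup_pinfty g)).
  { unfold limsup_pinfty. unfold Rbar_glb.
    destruct (Rbar_ex_glb _) as [l [Hl1 Hl2]]; cbn [proj1_sig].
    apply Hl2. intros y [M ->].
    destruct (Lub_Rbar_correct (fun z => exists s, M <= s /\ z = g s)) as [G1 G2].
    destruct (not_all_ex_not _ _ (fun H' => H (ex_intro _ M H'))) as [s Hs].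
    apply imply_to_and in Hs. destruct Hs as [Hs1 Hs2].
    eapply Rbar_le_trans; [|apply G1; exists s; split; [exact Hs1|reflexivity]].
    simpl. lra. }
  pose proof (Rbar_le_trans _ _ _ Hub Hc). simpl in H0. lra.
Qed.

Lemma limsup_le (g : R -> R) (c : R) :
  (forall c', c < c' -> exists M, forall s, M <= s -> g s <= c') ->
  Rbar_le (limsup_pinfty g) (Finite c).
Proof.
  intros H.
  assert (Hc : forall c', c < c' -> Rbar_le (limsup_pinfty g) (Finite c')).
  { intros c' Hc'. destruct (H c' Hc') as [M HM].
    unfold limsup_pinfty, Rbar_glb.
    destruct (Rbar_ex_glb _) as [l [Hl1 Hl2]]; cbn [proj1_sig].
    eapply Rbar_le_trans; [apply Hl1; exists M; reflexivity|].
    destruct (Lub_Rbar_correct (fun z => exists s, M <= s /\ z = g s)) as [G1 G2].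
    apply G2. intros z [s [Hs ->]]. simpl. apply HM. exact Hs. }
  destruct (limsup_pinfty g) as [l| |] eqn:E; simpl; auto.
  - destruct (Rle_lt_dec l c) as [h|h]; [exact h|].
    specialize (Hc ((l + c)/2) ltac:(lra)). simpl in Hc. lra.
  - specialize (Hc (c + 1) ltac:(lra)). simpl in Hc. exact Hc.
Qed.

Definition tends0 (r : R -> R) := forall eps, 0 < eps -> exists M, forall s, M <= s -> Rabs (r s) <= eps.

Lemma liminf_transfer (g1 g2 r : R -> R) (k h : R) :
  0 < k -> tends0 r -> (forall s, g2 s = k * g1 s + r s) ->
  Rbar_le (Finite h) (liminf_pinfty g1) -> Rbar_le (Finite (k * h)) (liminf_pinfty g2).
Proof.
  intros Hk Hr Heq Hl. apply liminf_ge. intros c' Hc'.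
  set (e := (k * h - c') / 2).
  assert (He : 0 < e) by (unfold e; lra).
  destruct (liminf_ev g1 h (h - e / k) Hl) as [M1 HM1].
  { assert (0 < e / k) by (apply Rdiv_lt_0_compat; lra). lra. }
  destruct (Hr e He) as [M2 HM2].
  exists (Rmax M1 M2). intros s Hs. rewrite Heq.
  specialize (HM1 s (Rle_trans _ _ _ (Rmax_l _ _) Hs)).
  specialize (HM2 s (Rle_trans _ _ _ (Rmax_r _ _) Hs)).
  apply Rabs_le_between in HM2.
  assert (k * (h - e / k) <= k * g1 s) by (apply Rmult_le_compat_l; lra).
  assert (k * (h - e / k) = k * h - e) by (field; lra).
  unfold e in *. lra.
Qed.

Lemma limsup_transfer (g1 g2 r : R -> R) (k h : R) :
  0 < k -> tends0 r -> (forall s, g2 s = k * g1 s + r s) ->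
  Rbar_le (limsup_pinfty g1) (Finite h) -> Rbar_le (limsup_pinfty g2) (Finite (k * h)).
Proof.
  intros Hk Hr Heq Hl. apply limsup_le. intros c' Hc'.
  set (e := (c' - k * h) / 2).
  assert (He : 0 < e) by (unfold e; lra).
  destruct (limsup_ev g1 h (h + e / k) Hl) as [M1 HM1].
  { assert (0 < e / k) by (apply Rdiv_lt_0_compat; lra). lra. }
  destruct (Hr e He) as [M2 HM2].
  exists (Rmax M1 M2). intros s Hs. rewrite Heq.
  specialize (HM1 s (Rle_trans _ _ _ (Rmax_l _ _) Hs)).
  specialize (HM2 s (Rle_trans _ _ _ (Rmax_r _ _) Hs)).
  apply Rabs_le_between in HM2.
  assert (k * g1 s <= k * (h + e / k)) by (apply Rmult_le_compat_l; lra).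
  assert (k * (h + e / k) = k * h + e) by (field; lra).
  unfold e in *. lra.
Qed.

Lemma Rbar_min_ge (c : R) (x y : Rbar) :
  Rbar_le (Finite c) (Rbar_min x y) <-> Rbar_le (Finite c) x /\ Rbar_le (Finite c) y.
Proof.
  destruct x as [x| |], y as [y| |]; simpl; try tauto.
  unfold Rmin; destruct (Rle_dec x y); split; intros; lra.
Qed.

Lemma Rbar_max2_le (c : R) (x y : Rbar) :
  Rbar_le (Rbar_max2 x y) (Finite c) <-> Rbar_le x (Finite c) /\ Rbar_le y (Finite c).
Proof.
  unfold Rbar_max2.
  destruct x as [x| |], y as [y| |]; simpl; try tauto.
  all: try (unfold Rmin; destruct (Rle_dec (-x) (-y)); split; intros; lra).
  all: rewrite Ropp_involutive; tauto.
Qed.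

Definition cont (g : R -> R) := forall x, continuous g x.

Lemma exR (f : R -> R) a b : cont f -> ex_RInt f a b.
Proof. intros H. apply (ex_RInt_continuous (V := R_CompleteNormedModule)). intros; apply H. Qed.

Lemma RInt_extR (f g : R -> R) a b : (forall x, Rmin a b < x < Rmax a b -> f x = g x) ->
  RInt f a b = RInt g a b.
Proof. intros H. apply RInt_ext. exact H. Qed.

Lemma RInt_plusR (f g : R -> R) a b : ex_RInt f a b -> ex_RInt g a b ->
  RInt (fun x => f x + g x) a b = RInt f a b + RInt g a b.
Proof. intros. apply (RInt_plus f g a b); auto. Qed.

Lemma RInt_scalR (f : R -> R) a b k : ex_RInt f a b ->
  RInt (fun x => k * f x) a b = k * RInt f a b.
Proof. intros. apply (RInt_scal f a b k); auto. Qed.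

Lemma RInt_minusR (f g : R -> R) a b : ex_RInt f a b -> ex_RInt g a b ->
  RInt (fun x => f x - g x) a b = RInt f a b - RInt g a b.
Proof. intros. apply (RInt_minus f g a b); auto. Qed.

Lemma cont_plus f g : cont f -> cont g -> cont (fun x => f x + g x).
Proof. intros Hf Hg x. apply (continuous_plus f g); auto. Qed.
Lemma cont_mult f g : cont f -> cont g -> cont (fun x => f x * g x).
Proof. intros Hf Hg x. apply (continuous_mult f g); auto. Qed.
Lemma cont_opp f : cont f -> cont (fun x => - f x).
Proof. intros Hf x. apply (continuous_opp f); auto. Qed.
Lemma cont_minus f g : cont f -> cont g -> cont (fun x => f x - g x).
Proof. intros Hf Hg x. apply (continuous_minus f g); auto. Qed.
Lemma cont_const c : cont (fun _ => c).
Proof. intros x. apply continuous_const. Qed.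
Lemma cont_id : cont (fun x => x).
Proof. intros x. apply continuous_id. Qed.
Lemma cont_comp f g : cont f -> cont g -> cont (fun x => f (g x)).
Proof. intros Hf Hg x. apply (continuous_comp g f); auto. Qed.
Lemma cont_exp : cont exp.
Proof. intros x. apply continuous_exp. Qed.

Definition Lap (g : R -> R) (d s : R) : R :=
  s ^ 2 * RInt (fun t => exp (- (s * t)) * g t) 0 d.

Lemma cont_kern g s : cont g -> cont (fun t => exp (- (s * t)) * g t).
Proof.
  intros Hg. apply cont_mult; auto.
  apply cont_comp; [apply cont_exp|]. apply cont_opp. apply cont_mult; [apply cont_const|apply cont_id].
Qed.

Lemma Lap_plus g1 g2 d s : cont g1 -> cont g2 ->
  Lap (fun t => g1 t + g2 t) d s = Lap g1 d s + Lap g2 d s.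
Proof.
  intros H1 H2. unfold Lap.
  rewrite (RInt_extR _ (fun t => exp (- (s * t)) * g1 t + exp (- (s * t)) * g2 t)) by (intros; ring).
  rewrite RInt_plusR; try (apply exR, cont_kern; auto). ring.
Qed.

Lemma Lap_scal g k d s : cont g -> Lap (fun t => k * g t) d s = k * Lap g d s.
Proof.
  intros H1. unfold Lap.
  rewrite (RInt_extR _ (fun t => k * (exp (- (s * t)) * g t))) by (intros; ring).
  rewrite RInt_scalR; try (apply exR, cont_kern; auto). ring.
Qed.

Lemma Lap_minus g1 g2 d s : cont g1 -> cont g2 ->
  Lap (fun t => g1 t - g2 t) d s = Lap g1 d s - Lap g2 d s.
Proof.
  intros H1 H2. unfold Lap.
  rewrite (RInt_extR _ (fun t => exp (- (s * t)) * g1 t - exp (- (s * t)) * g2 t)) by (intros; ring).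
  rewrite RInt_minusR; try (apply exR, cont_kern; auto). ring.
Qed.

Lemma Lap_ext g1 g2 d s : (forall t, Rmin 0 d < t < Rmax 0 d -> g1 t = g2 t) ->
  Lap g1 d s = Lap g2 d s.
Proof.
  intros H. unfold Lap. f_equal. apply RInt_ext. intros t Ht. rewrite H; auto.
Qed.

Lemma Lap_nonpos g d s : 0 <= d -> cont g -> (forall t, 0 <= t <= d -> g t <= 0) -> Lap g d s <= 0.
Proof.
  intros Hd Hg Hn. unfold Lap.
  assert (0 <= RInt (fun t => - (exp (- (s * t)) * g t)) 0 d).
  { apply RInt_ge_0; auto. apply exR. apply cont_opp, cont_kern; auto.
    intros t Ht. specialize (Hn t ltac:(lra)). pose proof (exp_pos (- (s * t))).
    assert (exp (- (s * t)) * g t <= 0).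
    { rewrite <- (Rmult_0_r (exp (- (s*t)))). apply Rmult_le_compat_l; lra. }
    lra. }
  rewrite (RInt_extR _ (fun t => (-1) * (exp (- (s * t)) * g t))) in H by (intros; ring).
  rewrite RInt_scalR in H by (apply exR, cont_kern; auto).
  assert (0 <= s ^ 2) by (apply pow2_ge_0).
  assert (RInt (fun t : R => exp (- (s * t)) * g t) 0 d <= 0) by lra.
  assert (s ^ 2 * RInt (fun t : R => exp (- (s * t)) * g t) 0 d <= s ^ 2 * 0) by (apply Rmult_le_compat_l; lra).
  lra.
Qed.

Lemma exp_mono_le x y : x <= y -> exp x <= exp y.
Proof. intros H. destruct (Req_dec x y). subst; lra. left; apply exp_increasing; lra. Qed.

Lemma Lap_tail g eta d s B : 0 <= eta <= d -> 0 <= s -> cont g ->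
  (forall t, eta <= t <= d -> Rabs (g t) <= B) ->
  Rabs (Lap g d s - Lap g eta s) <= B * (d - eta) * (s ^ 2 * exp (- (s * eta))).
Proof.
  intros Hd Hs Hg HB. unfold Lap.
  assert (Hex : forall u v, ex_RInt (fun t => exp (- (s * t)) * g t) u v) by (intros; apply exR, cont_kern; auto).
  rewrite <- (RInt_Chasles _ 0 eta d) by auto.
  change (plus ?a ?b) with (a + b).
  replace (s ^ 2 * (RInt (fun t : R => exp (- (s * t)) * g t) 0 eta + RInt (fun t : R => exp (- (s * t)) * g t) eta d) -
   s ^ 2 * RInt (fun t : R => exp (- (s * t)) * g t) 0 eta) with
    (s ^ 2 * RInt (fun t : R => exp (- (s * t)) * g t) eta d) by ring.
  rewrite Rabs_mult. rewrite (Rabs_right (s^2)) by (apply Rle_ge, pow2_ge_0).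
  assert (Rabs (RInt (fun t : R => exp (- (s * t)) * g t) eta d) <= (d - eta) * (exp (- (s * eta)) * B)).
  { apply abs_RInt_le_const; try lra; auto.
    intros t Ht. rewrite Rabs_mult. rewrite Rabs_right by (apply Rle_ge, Rlt_le, exp_pos).
    apply Rmult_le_compat; try apply Rlt_le, exp_pos; try apply Rabs_pos.
    apply exp_mono_le. assert (s * eta <= s * t) by (apply Rmult_le_compat_l; lra). lra.
    apply HB; lra. }
  assert (0 <= s^2) by apply pow2_ge_0.
  apply Rle_trans with (s ^ 2 * ((d - eta) * (exp (- (s * eta)) * B))).
  apply Rmult_le_compat_l; auto. right; ring.
Qed.

Lemma is_RInt_texp s a b : s <> 0 ->
  is_RInt (fun t => exp (- (s * t)) * t) a b
    ((- (b / s + 1 / s ^ 2) * exp (- (s * b))) - (- (a / s + 1 / s ^ 2) * exp (- (s * a)))).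
Proof.
  intros Hs.
  apply (is_RInt_derive (fun t => - (t / s + 1 / s ^ 2) * exp (- (s * t)))).
  - intros x _. auto_derive; auto. field. auto.
  - intros x _. apply (cont_kern (fun t => t)). apply cont_id.
Qed.

Lemma Lap_id d s : 0 < s -> Lap (fun t => t) d s = 1 - exp (- (s * d)) * (1 + s * d).
Proof.
  intros Hs. unfold Lap. rewrite (is_RInt_unique _ _ _ _ (is_RInt_texp s 0 d ltac:(lra))).
  rewrite Rmult_0_r, Ropp_0, exp_0. field. lra.
Qed.

Lemma Lap_small g eta s k : 0 <= eta -> 0 <= k -> 0 < s -> cont g ->
  (forall t, 0 <= t <= eta -> Rabs (g t) <= k * t) -> Rabs (Lap g eta s) <= k.
Proof.
  intros He Hk Hs Hg HB. unfold Lap.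
  rewrite Rabs_mult. rewrite (Rabs_right (s^2)) by (apply Rle_ge, pow2_ge_0).
  assert (Rabs (RInt (fun t : R => exp (- (s * t)) * g t) 0 eta) <= RInt (fun t => k * (exp (- (s * t)) * t)) 0 eta).
  { eapply Rle_trans. apply abs_RInt_le; auto. apply exR, cont_kern; auto.
    apply RInt_le; auto.
    apply exR. apply cont_comp with (f := Rabs). intros x; apply continuous_Rabs. apply cont_kern; auto.
    apply exR. apply cont_mult. apply cont_const. apply (cont_kern (fun t => t)), cont_id.
    intros t Ht. rewrite Rabs_mult, Rabs_right by (apply Rle_ge, Rlt_le, exp_pos).
    specialize (HB t ltac:(lra)). pose proof (exp_pos (- (s * t))).
    replace (k * (exp (- (s * t)) * t)) with (exp (- (s * t)) * (k * t)) by ring.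
    apply Rmult_le_compat_l; lra. }
  rewrite RInt_scalR in H by (apply exR, (cont_kern (fun t => t)), cont_id).
  rewrite (is_RInt_unique _ _ _ _ (is_RInt_texp s 0 eta ltac:(lra))) in H.
  rewrite Rmult_0_r, Ropp_0, exp_0 in H.
  replace ((- (eta / s + 1 / s ^ 2) * exp (- (s * eta)) - - (0 / s + 1 / s ^ 2) * 1)) with
    ((1 - exp (- (s * eta)) * (1 + s * eta)) / s ^ 2) in H by (field; lra).
  assert (0 < s ^ 2) by (apply pow_lt; lra).
  pose proof (exp_pos (- (s * eta))).
  assert (0 <= s * eta) by (apply Rmult_le_pos; lra).
  apply Rle_trans with (s ^ 2 * (k * ((1 - exp (- (s * eta)) * (1 + s * eta)) / s ^ 2))).
  apply Rmult_le_compat_l; lra.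
  replace (s ^ 2 * (k * ((1 - exp (- (s * eta)) * (1 + s * eta)) / s ^ 2))) with
    (k * (1 - exp (- (s * eta)) * (1 + s * eta))) by (field; lra).
  assert (0 <= exp (- (s * eta)) * (1 + s * eta)) by (apply Rmult_le_pos; lra).
  assert (k * (1 - exp (- (s * eta)) * (1 + s * eta)) <= k * 1) by (apply Rmult_le_compat_l; lra).
  lra.
Qed.

Lemma exp_cubic u : 0 <= u -> (u / 3) ^ 3 <= exp u.
Proof.
  intros Hu.
  replace u with (u/3 + u/3 + u/3) at 2 by field.
  rewrite !exp_plus.
  pose proof (exp_ineq1_le (u/3)).
  assert (0 <= u / 3) by lra.
  simpl. rewrite Rmult_1_r.
  assert (u/3 * (u/3) <= exp (u/3) * exp (u/3)) by (apply Rmult_le_compat; lra).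
  assert (u/3 * (u/3) * (u/3) <= exp (u/3) * exp (u/3) * exp (u/3)).
  { apply Rmult_le_compat; try lra. apply Rmult_le_pos; lra. }
  rewrite <- Rmult_assoc. lra.
Qed.

Lemma decay2 eta C : 0 < eta -> forall eps, 0 < eps ->
  exists M, 0 < M /\ forall s, M <= s -> C * (s ^ 2 * exp (- (s * eta))) <= eps.
Proof.
  intros He eps Heps.
  set (C' := Rabs C + 1).
  exists (27 * C' / (eta ^ 3 * eps) + 1).
  assert (HC' : 0 < C') by (unfold C'; pose proof (Rabs_pos C); lra).
  assert (0 < eta ^ 3) by (apply pow_lt; lra).
  assert (0 < 27 * C' / (eta ^ 3 * eps)) by (apply Rdiv_lt_0_compat; try apply Rmult_lt_0_compat; lra).
  split; [lra|]. intros s Hs.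
  assert (Hs0 : 0 < s) by lra.
  pose proof (exp_cubic (s * eta) ltac:(apply Rmult_le_pos; lra)).
  assert (0 < (s * eta / 3) ^ 3) by (apply pow_lt; apply Rdiv_lt_0_compat; try apply Rmult_lt_0_compat; lra).
  rewrite exp_Ropp.
  assert (Hb : s ^ 2 * / exp (s * eta) <= 27 / (eta ^ 3 * s)).
  { apply Rle_trans with (s ^ 2 * / ((s * eta / 3) ^ 3)).
    apply Rmult_le_compat_l. apply pow2_ge_0. apply Rinv_le_contravar; auto.
    right. field. lra. }
  assert (C * (s ^ 2 * / exp (s * eta)) <= C' * (s ^ 2 * / exp (s * eta))).
  { apply Rmult_le_compat_r. apply Rmult_le_pos. apply pow2_ge_0. apply Rlt_le, Rinv_0_lt_compat, exp_pos.
    unfold C'. pose proof (Rle_abs C). lra. }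
  eapply Rle_trans; [exact H3|].
  eapply Rle_trans. apply Rmult_le_compat_l; [lra|exact Hb].
  replace (C' * (27 / (eta ^ 3 * s))) with ((27 * C' / (eta ^ 3 * eps)) * eps / s) by (field; lra).
  apply Rmult_le_reg_r with s; auto.
  replace (27 * C' / (eta ^ 3 * eps) * eps / s * s) with (27 * C' / (eta ^ 3 * eps) * eps) by (field; lra).
  apply Rle_trans with (s * eps). apply Rmult_le_compat_r; lra. right; ring.
Qed.

Lemma Lap_tends0 g d B : 0 < d -> cont g -> (forall t, 0 <= t <= d -> Rabs (g t) <= B) ->
  (forall k, 0 < k -> exists eta, 0 < eta <= d /\ forall t, 0 <= t <= eta -> Rabs (g t) <= k * t) ->
  tends0 (Lap g d).
Proof.
  intros Hd Hg HB Hk eps Heps.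
  destruct (Hk (eps/2) ltac:(lra)) as [eta [Heta Ht]].
  destruct (decay2 eta (B * (d - eta)) ltac:(lra) (eps/2) ltac:(lra)) as [M [HM HM']].
  exists M. intros s Hs.
  pose proof (Lap_small g eta s (eps/2) ltac:(lra) ltac:(lra) ltac:(lra) Hg Ht).
  pose proof (Lap_tail g eta d s B ltac:(lra) ltac:(lra) Hg ltac:(intros; apply HB; lra)).
  specialize (HM' s Hs).
  replace (B * (d - eta) * (s ^ 2 * exp (- (s * eta)))) with (B * (d - eta) * (s ^ 2 * exp (- (s * eta)))) in H0 by ring.
  pose proof (Rabs_triang (Lap g d s - Lap g eta s) (Lap g eta s)).
  replace (Lap g d s - Lap g eta s + Lap g eta s) with (Lap g d s) in H1 by ring.
  rewrite Rmult_assoc in HM'. rewrite Rmult_assoc in H0. lra.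
Qed.

Lemma Lap_id_to1 d : 0 < d -> forall eps, 0 < eps -> exists M, forall s, M <= s -> 1 - eps <= Lap (fun t => t) d s.
Proof.
  intros Hd eps He.
  destruct (decay2 d (1 + d) Hd eps He) as [M [HM HM']].
  exists (Rmax M 1). intros s Hs.
  assert (Hs1 : 1 <= s) by (eapply Rle_trans; [apply Rmax_r|exact Hs]).
  specialize (HM' s (Rle_trans _ _ _ (Rmax_l _ _) Hs)).
  rewrite Lap_id by lra.
  assert (1 + s * d <= (1 + d) * s ^ 2).
  { assert (s <= s ^ 2) by nra. assert (s * d <= s^2 * d) by (apply Rmult_le_compat_r; lra). nra. }
  pose proof (exp_pos (- (s * d))).
  assert (exp (- (s * d)) * (1 + s * d) <= exp (- (s * d)) * ((1 + d) * s ^ 2)) by (apply Rmult_le_compat_l; lra).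
  assert (exp (- (s * d)) * ((1 + d) * s ^ 2) = (1 + d) * (s ^ 2 * exp (- (s * d)))) by ring.
  lra.
Qed.

Lemma ballR x e y : @ball R_UniformSpace x e y <-> Rabs (y - x) < e.
Proof. split; intros H; exact H. Qed.

Definition clamp (a b x : R) := Rmax a (Rmin b x).
Definition ext (a b : R) (F : R -> R) := fun x => F (clamp a b x).

Lemma clamp_id a b x : a <= x <= b -> clamp a b x = x.
Proof. intros H. unfold clamp, Rmax, Rmin. repeat destruct Rle_dec; lra. Qed.

Lemma clamp_in a b x : a <= b -> a <= clamp a b x <= b.
Proof. intros H. unfold clamp, Rmax, Rmin. repeat destruct Rle_dec; lra. Qed.

Lemma clamp_lip a b x y : a <= b -> Rabs (clamp a b y - clamp a b x) <= Rabs (y - x).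
Proof.
  intros H. unfold clamp, Rmax, Rmin. unfold Rabs.
  repeat destruct Rle_dec; repeat destruct Rcase_abs; lra.
Qed.

Lemma ext_cont a b F : a <= b -> continuous_on_cc a b F -> cont (ext a b F).
Proof.
  intros Hab HF x. unfold ext, continuous.
  apply (filterlim_comp _ _ _ (clamp a b) F (locally x)
          (within (fun y => a <= y <= b) (locally (clamp a b x)))).
  - unfold filterlim, filter_le, filtermap, within. intros P [eps Heps]. exists eps. intros y Hy. apply Heps.
    apply ballR. apply ballR in Hy. eapply Rle_lt_trans; [apply clamp_lip; auto|exact Hy].
    apply clamp_in; auto.
  - apply HF. apply clamp_in; auto.
Qed.

Lemma cont_cc a b F : cont F -> continuous_on_cc a b F.
Proof.
  intros HF x _. eapply filterlim_filter_le_1. apply filter_le_within. apply HF.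
Qed.

Lemma laplace_right_congr a b F F' x : (forall y, a <= y <= b -> F y = F' y) -> a <= x <= b ->
  laplace_right F x (b - x) = laplace_right F' x (b - x).
Proof.
  intros H Hx. apply functional_extensionality. intros s. unfold laplace_right. f_equal.
  apply RInt_ext. intros t Ht. rewrite Rmin_left in Ht by lra. rewrite Rmax_right in Ht by lra.
  rewrite !H; auto; lra.
Qed.

Lemma laplace_left_congr a b F F' x : (forall y, a <= y <= b -> F y = F' y) -> a <= x <= b ->
  laplace_left F x (x - a) = laplace_left F' x (x - a).
Proof.
  intros H Hx. apply functional_extensionality. intros s. unfold laplace_left. f_equal.
  apply RInt_ext. intros t Ht. rewrite Rmin_left in Ht by lra. rewrite Rmax_right in Ht by lra.
  rewrite !H; auto; lra.
Qed.

Lemma LD_congr a b F F' x : (forall y, a <= y <= b -> F y = F' y) -> a <= x <= b ->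
  lower_LD a b F x = lower_LD a b F' x /\ upper_LD a b F x = upper_LD a b F' x.
Proof.
  intros H Hx. unfold lower_LD, upper_LD.
  rewrite (laplace_right_congr a b F F' x H Hx), (laplace_left_congr a b F F' x H Hx). auto.
Qed.

Lemma ext_agree a b F y : a <= y <= b -> ext a b F y = F y.
Proof. intros H. unfold ext. rewrite clamp_id; auto. Qed.

Lemma major_ext a b h W : a <= b -> major_function a b h W ->
  major_function a b h (ext a b W) /\ cont (ext a b W).
Proof.
  intros Hab [Hc Hd]. assert (Hce : cont (ext a b W)) by (apply ext_cont; auto).
  split; auto. split. apply cont_cc; auto.
  intros x Hx. destruct (LD_congr a b (ext a b W) W x (fun y Hy => ext_agree a b W y Hy) Hx) as [E1 E2].
  rewrite E1. auto.
Qed.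

Lemma minor_ext a b h W : a <= b -> minor_function a b h W ->
  minor_function a b h (ext a b W) /\ cont (ext a b W).
Proof.
  intros Hab [Hc Hd]. assert (Hce : cont (ext a b W)) by (apply ext_cont; auto).
  split; auto. split. apply cont_cc; auto.
  intros x Hx. destruct (LD_congr a b (ext a b W) W x (fun y Hy => ext_agree a b W y Hy) Hx) as [E1 E2].
  rewrite E2. auto.
Qed.

Lemma lower_right a b F p c : a <= p < b -> Rbar_le (Finite c) (lower_LD a b F p) ->
  Rbar_le (Finite c) (liminf_pinfty (laplace_right F p (b - p))).
Proof.
  intros Hp H. unfold lower_LD in H.
  destruct (Rlt_dec a p); destruct (Rlt_dec p b); try lra; auto.
  apply Rbar_min_ge in H. tauto.
Qed.

Lemma upper_right a b F p c : a <= p < b -> Rbar_le (upper_LD a b F p) (Finite c) ->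
  Rbar_le (limsup_pinfty (laplace_right F p (b - p))) (Finite c).
Proof.
  intros Hp H. unfold upper_LD in H.
  destruct (Rlt_dec a p); destruct (Rlt_dec p b); try lra; auto.
  apply Rbar_max2_le in H. tauto.
Qed.

Lemma cont_shiftR F p : cont F -> cont (fun t => F (p + t) - F p).
Proof.
  intros H. apply cont_minus; [|apply cont_const].
  apply cont_comp; auto. apply cont_plus; [apply cont_const|apply cont_id].
Qed.

Lemma cont_shiftL F p : cont F -> cont (fun t => F (p - t) - F p).
Proof.
  intros H. apply cont_minus; [|apply cont_const].
  apply cont_comp; auto. apply cont_minus; [apply cont_const|apply cont_id].
Qed.

Lemma bounded_on F u v : u <= v -> cont F -> exists B, forall t, u <= t <= v -> Rabs (F t) <= B.
Proof.
  intros Huv HF.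
  destruct (continuous_ab_maj_consistent F u v Huv (fun c _ => HF c)) as [m1 [Hm1 _]].
  destruct (continuous_ab_min_consistent F u v Huv (fun c _ => HF c)) as [m2 [Hm2 _]].
  exists (Rabs (F m1) + Rabs (F m2)). intros t Ht.
  specialize (Hm1 t Ht). specialize (Hm2 t Ht).
  unfold Rabs; repeat destruct Rcase_abs; lra.
Qed.

Lemma compare_cont a b h W V x y : a < b -> cont W -> cont V ->
  major_function a b h W -> minor_function a b h V -> a <= x -> x <= y -> y <= b ->
  V y - V x <= W y - W x.
Proof.
  intros Hab HWc HVc [_ HW] [_ HV] Hx Hxy Hy.
  destruct (Rle_lt_dec (V y - V x) (W y - W x)) as [ok|Hlt]; [exact ok|exfalso].
  assert (Hxy' : x < y) by (destruct (Req_dec x y); [subst; lra|lra]).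
  set (eps := ((W x - V x) - (W y - V y)) / (2 * (y - x))).
  assert (Heps : 0 < eps) by (unfold eps; apply Rdiv_lt_0_compat; lra).
  set (E := fun t => W t - V t + eps * (t - x)).
  assert (HEc : cont E).
  { unfold E. apply cont_plus. apply cont_minus; auto. apply cont_mult. apply cont_const.
    apply cont_minus. apply cont_id. apply cont_const. }
  destruct (continuous_ab_maj_consistent E x y ltac:(lra) (fun c _ => HEc c)) as [p [Hp Hpxy]].
  assert (HEy : E y < E x).
  { unfold E. replace (eps * (y - x)) with (((W x - V x) - (W y - V y)) / 2).
    2:{ unfold eps. field. lra. } lra. }
  assert (Hpy : p < y).
  { destruct (Req_dec p y). subst p. specialize (Hp x ltac:(lra)). lra. lra. }
  assert (Hpb : a <= p < b) by lra.
  destruct (HW p ltac:(lra)) as [HWp _]. destruct (HV p ltac:(lra)) as [HVp _].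
  apply (lower_right a b W p) in HWp; auto.
  apply (upper_right a b V p) in HVp; auto.
  destruct (liminf_ev _ _ (h p - eps / 8) HWp ltac:(lra)) as [M1 HM1].
  destruct (limsup_ev _ _ (h p + eps / 8) HVp ltac:(lra)) as [M2 HM2].
  destruct (Lap_id_to1 (b - p) ltac:(lra) (1/2) ltac:(lra)) as [M3 HM3].
  set (gE := fun t => E (p + t) - E p).
  assert (HgE : cont gE) by (apply cont_shiftR; auto).
  destruct (bounded_on gE 0 (b - p) ltac:(lra) HgE) as [B HB].
  destruct (decay2 (y - p) (B * (b - y)) ltac:(lra) (eps / 8) ltac:(lra)) as [M4 [HM4 HM4']].
  set (s := Rmax (Rmax M1 M2) (Rmax M3 (Rmax M4 1))).
  assert (Hs1 : M1 <= s) by (unfold s; repeat (apply Rmax_Rle; left); lra).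
  assert (Hs2 : M2 <= s) by (unfold s; apply Rmax_Rle; left; apply Rmax_Rle; right; lra).
  assert (Hs3 : M3 <= s) by (unfold s; apply Rmax_Rle; right; apply Rmax_Rle; left; lra).
  assert (Hs4 : M4 <= s) by (unfold s; apply Rmax_Rle; right; apply Rmax_Rle; right; apply Rmax_Rle; left; lra).
  assert (Hs5 : 1 <= s) by (unfold s; apply Rmax_Rle; right; apply Rmax_Rle; right; apply Rmax_Rle; right; lra).
  specialize (HM1 s Hs1). specialize (HM2 s Hs2). specialize (HM3 s Hs3). specialize (HM4' s Hs4).
  unfold laplace_right in HM1, HM2.
  fold (Lap (fun t => W (p + t) - W p) (b - p) s) in HM1.
  fold (Lap (fun t => V (p + t) - V p) (b - p) s) in HM2.
  assert (Hlin : Lap gE (b - p) s = Lap (fun t => W (p + t) - W p) (b - p) s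
                   - Lap (fun t => V (p + t) - V p) (b - p) s + eps * Lap (fun t => t) (b - p) s).
  { rewrite <- Lap_scal by apply cont_id.
    rewrite <- Lap_minus by (apply cont_shiftR; auto).
    rewrite <- Lap_plus. 2:{ apply cont_minus; apply cont_shiftR; auto. }
    2:{ apply cont_mult. apply cont_const. apply cont_id. }
    apply Lap_ext. intros t _. unfold gE, E. ring. }
  assert (Hneg : Lap gE (y - p) s <= 0).
  { apply Lap_nonpos; auto. lra. intros t Ht. unfold gE. specialize (Hp (p + t) ltac:(lra)). lra. }
  pose proof (Lap_tail gE (y - p) (b - p) s B ltac:(lra) ltac:(lra) HgE ltac:(intros; apply HB; lra)) as Htail.
  replace (b - p - (y - p)) with (b - y) in Htail by ring.
  assert (eps * (1 - 1/2) <= eps * Lap (fun t => t) (b - p) s) by (apply Rmult_le_compat_l; lra).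
  apply Rabs_le_between in Htail. lra.
Qed.

Lemma compare a b h W V x y : a < b ->
  major_function a b h W -> minor_function a b h V -> a <= x -> x <= y -> y <= b ->
  V y - V x <= W y - W x.
Proof.
  intros Hab HW HV Hx Hxy Hy.
  destruct (major_ext a b h W ltac:(lra) HW) as [HW' HWc].
  destruct (minor_ext a b h V ltac:(lra) HV) as [HV' HVc].
  pose proof (compare_cont a b h _ _ x y Hab HWc HVc HW' HV' Hx Hxy Hy).
  rewrite !ext_agree in H by lra. exact H.
Qed.

Lemma cont_RInt_upper (f : R -> R) a : cont f -> cont (fun x => RInt f a x).
Proof.
  intros Hf x. apply (continuous_RInt_1 f a x (fun z => RInt f a z)).
  apply filter_forall. intros z. apply (RInt_correct (V := R_CompleteNormedModule)). apply exR; auto.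
Qed.

Lemma FTC (phi phi' : R -> R) u v : (forall x, is_derive phi x (phi' x)) -> cont phi' ->
  RInt phi' u v = phi v - phi u.
Proof.
  intros Hd Hc. apply is_RInt_unique. apply (is_RInt_derive phi phi'); intros; auto.
Qed.

Lemma cont_of_derive (phi phi' : R -> R) : (forall x, is_derive phi x (phi' x)) -> cont phi.
Proof. intros Hd x. apply (ex_derive_continuous (K := R_AbsRing) (V := R_NormedModule)). exists (phi' x). auto. Qed.

Definition prodM a (W phi phi' : R -> R) := fun x => W x * phi x - RInt (fun t => W t * phi' t) a x.

Lemma prodM_cont a (W phi phi' : R -> R) : cont W -> (forall x, is_derive phi x (phi' x)) -> cont phi' ->
  cont (prodM a W phi phi').
Proof.
  intros HW Hd Hc. unfold prodM. apply cont_minus. apply cont_mult; auto. eapply cont_of_derive; eauto.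
  apply cont_RInt_upper. apply cont_mult; auto.
Qed.

Lemma decomp a (W phi phi' : R -> R) p u : cont W -> (forall x, is_derive phi x (phi' x)) -> cont phi' ->
  prodM a W phi phi' (p + u) - prodM a W phi phi' p =
  phi p * (W (p + u) - W p) +
  ((W (p + u) - W p) * (phi (p + u) - phi p) - RInt (fun t => (W t - W p) * phi' t) p (p + u)).
Proof.
  intros HW Hd Hc. unfold prodM.
  assert (Hex : forall u v, ex_RInt (fun t => W t * phi' t) u v) by (intros; apply exR, cont_mult; auto).
  rewrite <- (RInt_Chasles (fun t => W t * phi' t) a p (p + u)) by auto.
  change (plus ?x ?y) with (x + y).
  rewrite (RInt_extR (fun t => (W t - W p) * phi' t) (fun t => W t * phi' t - W p * phi' t)) by (intros; ring).
  rewrite RInt_minusR. 2: apply exR, cont_mult; auto.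
  2: apply exR, cont_mult; auto; apply cont_const.
  rewrite RInt_scalR by (apply exR; auto).
  rewrite (FTC phi phi' p (p + u)) by auto.
  ring.
Qed.

Lemma abs_RInt_gen (f : R -> R) c d M : cont f -> (forall t, Rmin c d <= t <= Rmax c d -> Rabs (f t) <= M) ->
  Rabs (RInt f c d) <= Rabs (d - c) * M.
Proof.
  intros Hf HM. destruct (Rle_dec c d).
  - rewrite (Rabs_right (d - c)) by lra. apply abs_RInt_le_const; auto. apply exR; auto.
    intros t Ht. apply HM. rewrite Rmin_left, Rmax_right; lra.
  - rewrite <- (opp_RInt_swap (V := R_CompleteNormedModule)) by (apply exR; auto).
    change (opp ?x) with (- x). rewrite Rabs_Ropp.
    rewrite (Rabs_left (d - c)) by lra. replace (- (d - c)) with (c - d) by ring.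
    apply abs_RInt_le_const; auto. lra. apply exR; auto.
    intros t Ht. apply HM. rewrite Rmin_right, Rmax_left; lra.
Qed.

Lemma e_small a b (W phi phi' : R -> R) p C : cont W -> (forall x, is_derive phi x (phi' x)) -> cont phi' ->
  0 <= C -> (forall t, a <= t <= b -> Rabs (phi' t) <= C) -> a <= p <= b ->
  forall k, 0 < k -> exists eta, 0 < eta /\ forall u, Rabs u <= eta -> a <= p + u <= b ->
    Rabs ((W (p + u) - W p) * (phi (p + u) - phi p) - RInt (fun t => (W t - W p) * phi' t) p (p + u))
      <= k * Rabs u.
Proof.
  intros HW Hd Hc HC HCb Hp k Hk.
  set (e2 := k / (2 * C + 1)).
  assert (He2 : 0 < e2) by (unfold e2; apply Rdiv_lt_0_compat; lra).
  destruct (proj1 (filterlim_locally W (W p)) (HW p) (mkposreal e2 He2)) as [eta Heta].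
  exists (eta / 2). split. destruct eta; simpl; lra.
  intros u Hu Hpu.
  assert (HWu : forall t, Rabs (t - p) <= Rabs u -> Rabs (W t - W p) <= e2).
  { intros t Ht. left. apply ballR. apply Heta. apply ballR. destruct eta; simpl in *; lra. }
  assert (Hbetween : forall t, Rmin p (p + u) <= t <= Rmax p (p + u) -> a <= t <= b /\ Rabs (t - p) <= Rabs u).
  { intros t Ht. unfold Rmin, Rmax in Ht. destruct Rle_dec in Ht; unfold Rabs; repeat destruct Rcase_abs; lra. }
  assert (H1 : Rabs (phi (p + u) - phi p) <= Rabs u * C).
  { rewrite <- (FTC phi phi' p (p + u)) by auto.
    replace (Rabs u) with (Rabs (p + u - p)) by (f_equal; ring).
    apply abs_RInt_gen; auto. intros t Ht. apply HCb. apply Hbetween; auto. }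
  assert (H2 : Rabs (RInt (fun t => (W t - W p) * phi' t) p (p + u)) <= Rabs u * (e2 * C)).
  { replace (Rabs u) with (Rabs (p + u - p)) by (f_equal; ring).
    apply abs_RInt_gen. apply cont_mult; auto. apply cont_minus; auto; apply cont_const.
    intros t Ht. destruct (Hbetween t Ht) as [Hab Htp]. rewrite Rabs_mult.
    apply Rmult_le_compat; try apply Rabs_pos; auto. }
  assert (H3 : Rabs (W (p + u) - W p) <= e2) by (apply HWu; right; f_equal; ring).
  eapply Rle_trans. apply Rabs_triang. rewrite Rabs_Ropp, Rabs_mult.
  assert (Rabs (W (p + u) - W p) * Rabs (phi (p + u) - phi p) <= e2 * (Rabs u * C)).
  { apply Rmult_le_compat; try apply Rabs_pos; auto. }
  assert (e2 * (2 * C + 1) = k) by (unfold e2; field; lra).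
  pose proof (Rabs_pos u).
  assert (e2 * (Rabs u * C) + Rabs u * (e2 * C) <= k * Rabs u).
  { rewrite <- H0. assert (0 <= e2 * Rabs u) by (apply Rmult_le_pos; lra). nra. }
  lra.
Qed.

Section Prod.
Variables (a b : R) (W phi phi' : R -> R) (C : R).
Hypotheses (Hab : a < b) (HW : cont W) (Hd : forall x, is_derive phi x (phi' x)) (Hc : cont phi')
  (HC : 0 <= C) (HCb : forall t, a <= t <= b -> Rabs (phi' t) <= C).

Let M := prodM a W phi phi'.

Lemma right_tends p : a <= p < b ->
  tends0 (Lap (fun t => M (p + t) - M p - phi p * (W (p + t) - W p)) (b - p)).
Proof.
  intros Hp.
  assert (Hrc : cont (fun t => M (p + t) - M p - phi p * (W (p + t) - W p))).
  { apply cont_minus. apply cont_shiftR. apply prodM_cont; auto.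
    apply cont_mult. apply cont_const. apply cont_shiftR; auto. }
  destruct (bounded_on _ 0 (b - p) ltac:(lra) Hrc) as [B HB].
  apply (Lap_tends0 _ _ B); auto. lra.
  intros k Hk. destruct (e_small a b W phi phi' p C HW Hd Hc HC HCb ltac:(lra) k Hk) as [eta [Heta He]].
  exists (Rmin eta (b - p)). split. split. apply Rmin_glb_lt; lra. apply Rmin_r.
  intros t Ht. assert (t <= eta) by (eapply Rle_trans; [apply Ht|apply Rmin_l]).
  assert (t <= b - p) by (eapply Rle_trans; [apply Ht|apply Rmin_r]).
  unfold M. rewrite decomp; auto.
  replace (phi p * (W (p + t) - W p) + ((W (p + t) - W p) * (phi (p + t) - phi p) -
     RInt (fun t0 : R => (W t0 - W p) * phi' t0) p (p + t)) - phi p * (W (p + t) - W p)) with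
    ((W (p + t) - W p) * (phi (p + t) - phi p) - RInt (fun t0 : R => (W t0 - W p) * phi' t0) p (p + t)) by ring.
  assert (Hx := He t ltac:(rewrite Rabs_right; lra) ltac:(lra)).
  rewrite (Rabs_right t) in Hx by lra. exact Hx.
Qed.

Lemma left_tends p : a < p <= b ->
  tends0 (Lap (fun t => M (p - t) - M p - phi p * (W (p - t) - W p)) (p - a)).
Proof.
  intros Hp.
  assert (Hrc : cont (fun t => M (p - t) - M p - phi p * (W (p - t) - W p))).
  { apply cont_minus. apply cont_shiftL. apply prodM_cont; auto.
    apply cont_mult. apply cont_const. apply cont_shiftL; auto. }
  destruct (bounded_on _ 0 (p - a) ltac:(lra) Hrc) as [B HB].
  apply (Lap_tends0 _ _ B); auto. lra.
  intros k Hk. destruct (e_small a b W phi phi' p C HW Hd Hc HC HCb ltac:(lra) k Hk) as [eta [Heta He]].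
  exists (Rmin eta (p - a)). split. split. apply Rmin_glb_lt; lra. apply Rmin_r.
  intros t Ht. assert (t <= eta) by (eapply Rle_trans; [apply Ht|apply Rmin_l]).
  assert (t <= p - a) by (eapply Rle_trans; [apply Ht|apply Rmin_r]).
  replace (p - t) with (p + - t) by ring.
  unfold M. rewrite decomp; auto.
  replace (phi p * (W (p + - t) - W p) + ((W (p + - t) - W p) * (phi (p + - t) - phi p) -
     RInt (fun t0 : R => (W t0 - W p) * phi' t0) p (p + - t)) - phi p * (W (p + - t) - W p)) with
    ((W (p + - t) - W p) * (phi (p + - t) - phi p) - RInt (fun t0 : R => (W t0 - W p) * phi' t0) p (p + - t)) by ring.
  assert (Hx := He (- t) ltac:(rewrite Rabs_Ropp, Rabs_right; lra) ltac:(lra)).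
  rewrite Rabs_Ropp, (Rabs_right t) in Hx by lra. exact Hx.
Qed.

Lemma right_eq p d s : laplace_right M p d s =
  phi p * laplace_right W p d s + Lap (fun t => M (p + t) - M p - phi p * (W (p + t) - W p)) d s.
Proof.
  change (laplace_right M p d s) with (Lap (fun t => M (p + t) - M p) d s).
  change (laplace_right W p d s) with (Lap (fun t => W (p + t) - W p) d s).
  rewrite <- Lap_scal by (apply cont_shiftR; auto).
  rewrite <- Lap_plus.
  apply Lap_ext. intros; ring.
  apply cont_mult. apply cont_const. apply cont_shiftR; auto.
  apply cont_minus. apply cont_shiftR. apply prodM_cont; auto.
  apply cont_mult. apply cont_const. apply cont_shiftR; auto.
Qed.

Lemma left_eq p d s : laplace_left M p d s =
  phi p * laplace_left W p d s + - Lap (fun t => M (p - t) - M p - phi p * (W (p - t) - W p)) d s.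
Proof.
  unfold laplace_left.
  assert (E1 : (- s ^ 2) * RInt (fun t => exp (- (s * t)) * (M (p - t) - M p)) 0 d = - Lap (fun t => M (p - t) - M p) d s)
    by (unfold Lap; ring).
  assert (E2 : (- s ^ 2) * RInt (fun t => exp (- (s * t)) * (W (p - t) - W p)) 0 d = - Lap (fun t => W (p - t) - W p) d s)
    by (unfold Lap; ring).
  rewrite E1, E2.
  rewrite (Lap_ext _ (fun t => phi p * (W (p - t) - W p) + (M (p - t) - M p - phi p * (W (p - t) - W p))))
    by (intros; ring).
  rewrite Lap_plus, Lap_scal. ring.
  apply cont_shiftL; auto.
  apply cont_mult. apply cont_const. apply cont_shiftL; auto.
  apply cont_minus. apply cont_shiftL. apply prodM_cont; auto.
  apply cont_mult. apply cont_const. apply cont_shiftL; auto.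
Qed.

End Prod.

Lemma lower_assemble a b F G k c x : a < b -> a <= x <= b ->
  (x < b -> forall c, Rbar_le (Finite c) (liminf_pinfty (laplace_right F x (b - x))) ->
     Rbar_le (Finite (k * c)) (liminf_pinfty (laplace_right G x (b - x)))) ->
  (a < x -> forall c, Rbar_le (Finite c) (liminf_pinfty (laplace_left F x (x - a))) ->
     Rbar_le (Finite (k * c)) (liminf_pinfty (laplace_left G x (x - a)))) ->
  Rbar_le (Finite c) (lower_LD a b F x) -> Rbar_le (Finite (k * c)) (lower_LD a b G x).
Proof.
  intros Hab Hx HR HL H. unfold lower_LD in *.
  destruct (Rlt_dec a x); destruct (Rlt_dec x b).
  - apply Rbar_min_ge in H. apply Rbar_min_ge. split; [apply HR|apply HL]; tauto.
  - apply HL; auto.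
  - apply HR; auto.
  - lra.
Qed.

Lemma upper_assemble a b F G k c x : a < b -> a <= x <= b ->
  (x < b -> forall c, Rbar_le (limsup_pinfty (laplace_right F x (b - x))) (Finite c) ->
     Rbar_le (limsup_pinfty (laplace_right G x (b - x))) (Finite (k * c))) ->
  (a < x -> forall c, Rbar_le (limsup_pinfty (laplace_left F x (x - a))) (Finite c) ->
     Rbar_le (limsup_pinfty (laplace_left G x (x - a))) (Finite (k * c))) ->
  Rbar_le (upper_LD a b F x) (Finite c) -> Rbar_le (upper_LD a b G x) (Finite (k * c)).
Proof.
  intros Hab Hx HR HL H. unfold upper_LD in *.
  destruct (Rlt_dec a x); destruct (Rlt_dec x b).
  - apply Rbar_max2_le in H. apply Rbar_max2_le. split; [apply HR|apply HL]; tauto.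
  - apply HL; auto.
  - apply HR; auto.
  - lra.
Qed.

Lemma tends0_opp r : tends0 r -> tends0 (fun s => - r s).
Proof. intros H e He. destruct (H e He) as [M HM]. exists M. intros. rewrite Rabs_Ropp. auto. Qed.

Lemma major_prod a b h (W phi phi' : R -> R) : a < b -> cont W -> major_function a b h W ->
  (forall x, is_derive phi x (phi' x)) -> cont phi' -> (forall x, a <= x <= b -> 0 < phi x) ->
  major_function a b (fun x => h x * phi x) (prodM a W phi phi').
Proof.
  intros Hab HWc [_ HW] Hd Hc Hpos.
  destruct (bounded_on phi' a b ltac:(lra) Hc) as [C0 HC0].
  set (C := Rabs C0).
  assert (HC : 0 <= C) by apply Rabs_pos.
  assert (HCb : forall t, a <= t <= b -> Rabs (phi' t) <= C).
  { intros t Ht. eapply Rle_trans. apply HC0; auto. apply Rle_abs. }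
  split. apply cont_cc. apply prodM_cont; auto.
  intros x Hx. destruct (HW x Hx) as [Hl _].
  assert (Hres : Rbar_le (Finite (phi x * h x)) (lower_LD a b (prodM a W phi phi') x)).
  { apply (lower_assemble a b W); auto.
    - intros Hxb c Hc'. eapply (liminf_transfer (laplace_right W x (b - x)) _ _ (phi x) c).
      3:{ intros s. apply right_eq; auto. }
      apply Hpos; auto. apply (right_tends a b W phi phi' C); auto. lra. auto.
    - intros Hax c Hc'. eapply (liminf_transfer (laplace_left W x (x - a)) _ _ (phi x) c).
      3:{ intros s. apply left_eq; auto. }
      apply Hpos; auto. apply tends0_opp. apply (left_tends a b W phi phi' C); auto. lra. auto. }
  rewrite Rmult_comm in Hres. split; auto.
  intros E. rewrite E in Hres. simpl in Hres. auto.
Qed.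

Lemma minor_prod a b h (W phi phi' : R -> R) : a < b -> cont W -> minor_function a b h W ->
  (forall x, is_derive phi x (phi' x)) -> cont phi' -> (forall x, a <= x <= b -> 0 < phi x) ->
  minor_function a b (fun x => h x * phi x) (prodM a W phi phi').
Proof.
  intros Hab HWc [_ HW] Hd Hc Hpos.
  destruct (bounded_on phi' a b ltac:(lra) Hc) as [C0 HC0].
  set (C := Rabs C0).
  assert (HC : 0 <= C) by apply Rabs_pos.
  assert (HCb : forall t, a <= t <= b -> Rabs (phi' t) <= C).
  { intros t Ht. eapply Rle_trans. apply HC0; auto. apply Rle_abs. }
  split. apply cont_cc. apply prodM_cont; auto.
  intros x Hx. destruct (HW x Hx) as [Hl _].
  assert (Hres : Rbar_le (upper_LD a b (prodM a W phi phi') x) (Finite (phi x * h x))).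
  { apply (upper_assemble a b W); auto.
    - intros Hxb c Hc'. eapply (limsup_transfer (laplace_right W x (b - x)) _ _ (phi x) c).
      3:{ intros s. apply right_eq; auto. }
      apply Hpos; auto. apply (right_tends a b W phi phi' C); auto. lra. auto.
    - intros Hax c Hc'. eapply (limsup_transfer (laplace_left W x (x - a)) _ _ (phi x) c).
      3:{ intros s. apply left_eq; auto. }
      apply Hpos; auto. apply tends0_opp. apply (left_tends a b W phi phi' C); auto. lra. auto. }
  rewrite Rmult_comm in Hres. split; auto.
  intros E. rewrite E in Hres. simpl in Hres. auto.
Qed.

Lemma laplace_shift (W : R -> R) c x d :
  laplace_right (fun y => W y + c) x d = laplace_right W x d /\
  laplace_left (fun y => W y + c) x d = laplace_left W x d.
Proof.
  split; apply functional_extensionality; intros s; unfold laplace_right, laplace_left; f_equal;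
  apply RInt_extR; intros; ring.
Qed.

Lemma LD_shift a b (W : R -> R) c x :
  lower_LD a b (fun y => W y + c) x = lower_LD a b W x /\
  upper_LD a b (fun y => W y + c) x = upper_LD a b W x.
Proof.
  unfold lower_LD, upper_LD.
  rewrite !(proj1 (laplace_shift W c x _)), !(proj2 (laplace_shift W c x _)). auto.
Qed.

Lemma cc_shift a b (W : R -> R) c : continuous_on_cc a b W -> continuous_on_cc a b (fun x => W x + c).
Proof.
  intros Hc x Hx. specialize (Hc x Hx).
  apply (filterlim_comp _ _ _ W (fun y => y + c) _ _ _ Hc).
  apply (continuous_plus (fun y => y) (fun _ => c)). apply continuous_id. apply continuous_const.
Qed.

Lemma major_shift a b h W c : major_function a b h W -> major_function a b h (fun x => W x + c).
Proof.
  intros [Hc HW]. split. apply cc_shift; auto.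
  intros x Hx. rewrite (proj1 (LD_shift a b W c x)). auto.
Qed.

Lemma minor_shift a b h W c : minor_function a b h W -> minor_function a b h (fun x => W x + c).
Proof.
  intros [Hc HW]. split. apply cc_shift; auto.
  intros x Hx. rewrite (proj2 (LD_shift a b W c x)). auto.
Qed.

Lemma le_eps x y : (forall e, 0 < e -> x <= y + e) -> x <= y.
Proof. apply le_epsilon. Qed.

Lemma squeeze_integral h a b J :
  (forall M N, major_function a b h M -> minor_function a b h N -> N b - N a <= M b - M a) ->
  (forall e, 0 < e -> exists M, major_function a b h M /\ M b - M a <= J + e) ->
  (forall e, 0 < e -> exists N, minor_function a b h N /\ J - e <= N b - N a) ->
  is_laplace_integral h a b J.
Proof.
  intros Hcmp HM HN. split; split.
  - intros v [N [HNm ->]]. simpl. apply le_eps. intros e He.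
    destruct (HM e He) as [M [HMm HMv]]. specialize (Hcmp M N HMm HNm). lra.
  - intros B HB. destruct B as [B| |]; simpl; auto.
    + apply le_eps. intros e He. destruct (HN e He) as [N [HNm HNv]].
      specialize (HB (N b - N a) (ex_intro _ N (conj HNm eq_refl))). simpl in HB. lra.
    + destruct (HN 1 Rlt_0_1) as [N [HNm HNv]].
      specialize (HB (N b - N a) (ex_intro _ N (conj HNm eq_refl))). simpl in HB. auto.
  - intros v [M [HMm ->]]. simpl. apply le_eps. intros e He.
    destruct (HN e He) as [N [HNm HNv]]. specialize (Hcmp M N HMm HNm). lra.
  - intros B HB. destruct B as [B| |]; simpl; auto.
    + apply le_eps. intros e He. destruct (HM e He) as [M [HMm HMv]].
      specialize (HB (M b - M a) (ex_intro _ M (conj HMm eq_refl))). simpl in HB. lra.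
    + destruct (HM 1 Rlt_0_1) as [M [HMm HMv]].
      specialize (HB (M b - M a) (ex_intro _ M (conj HMm eq_refl))). simpl in HB. auto.
Qed.

Lemma integral_unique h a b I1 I2 : is_laplace_integral h a b I1 -> is_laplace_integral h a b I2 -> I1 = I2.
Proof.
  intros [H1 _] [H2 _]. apply is_lub_Rbar_unique in H1. apply is_lub_Rbar_unique in H2.
  rewrite H1 in H2. injection H2. auto.
Qed.

Lemma integral_approx h a b I : is_laplace_integral h a b I ->
  (forall W, major_function a b h W -> I <= W b - W a) /\
  (forall V, minor_function a b h V -> V b - V a <= I) /\
  (forall e, 0 < e -> exists W V, major_function a b h W /\ minor_function a b h V /\
     W b - W a <= I + e /\ I - e <= V b - V a).
Proof.
  intros [[Hl1 Hl2] [Hg1 Hg2]].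
  split; [|split].
  - intros W HW. apply (Hg1 (W b - W a)). exists W; auto.
  - intros V HV. apply (Hl1 (V b - V a)). exists V; auto.
  - intros e He.
    destruct (classic (exists W, major_function a b h W /\ W b - W a <= I + e)) as [[W [HW HWv]]|HnW].
    2:{ exfalso. assert (Rbar_le (Finite (I + e)) (Finite I)).
        { apply Hg2. intros w [W [HW ->]]. simpl. destruct (Rle_lt_dec (I + e) (W b - W a)); auto.
          exfalso. apply HnW. exists W. split; auto; lra. }
        simpl in H. lra. }
    destruct (classic (exists V, minor_function a b h V /\ I - e <= V b - V a)) as [[V [HV HVv]]|HnV].
    2:{ exfalso. assert (Rbar_le (Finite I) (Finite (I - e))).
        { apply Hl2. intros w [V [HV ->]]. simpl. destruct (Rle_lt_dec (V b - V a) (I - e)); auto.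
          exfalso. apply HnV. exists V. split; auto; lra. }
        simpl in H. lra. }
    exists W, V. auto.
Qed.

Lemma glb_bounds (S : R -> Prop) L u : S u -> (forall w, S w -> L <= w) ->
  L <= real (Glb_Rbar S) /\ (forall w, S w -> real (Glb_Rbar S) <= w).
Proof.
  intros Hu HL. destruct (Glb_Rbar_correct S) as [G1 G2].
  assert (HL' : Rbar_le (Finite L) (Glb_Rbar S)) by (apply G2; intros w Hw; simpl; auto).
  pose proof (G1 u Hu) as Hgu.
  destruct (Glb_Rbar S) as [g| |]; simpl in *; try contradiction.
  split; auto.
Qed.

Lemma unif_cont (F : R -> R) : (forall e, 0 < e -> exists g, cont g /\ forall x, Rabs (g x - F x) <= e) -> cont F.
Proof.
  intros H x. apply filterlim_locally. intros eps.
  destruct (H (eps / 3)) as [g [Hg Hgx]]. destruct eps; simpl; lra.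
  destruct (proj1 (filterlim_locally g (g x)) (Hg x) (mkposreal (eps / 3) ltac:(destruct eps; simpl; lra))) as [d Hd].
  exists d. intros y Hy. apply ballR. specialize (Hd y Hy). apply ballR in Hd. simpl in Hd.
  pose proof (Hgx x). pose proof (Hgx y).
  apply Rabs_le_between in H0. apply Rabs_le_between in H1. apply Rabs_lt_between in Hd.
  apply Rabs_lt_between. destruct eps; simpl in *. unfold minus, plus, opp in Hd; simpl in Hd. lra.
Qed.

Section Prim.
Variables (a b : R) (h : R -> R) (I : R).
Hypotheses (Hab : a < b) (HI : is_laplace_integral h a b I).

Definition Phi0 (x : R) := real (Glb_Rbar (fun w => exists W, major_function a b h W /\ w = W x - W a)).

Lemma Phi0_approx : forall e, 0 < e ->
  exists W V, major_function a b h W /\ cont W /\ W a = 0 /\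
              minor_function a b h V /\ cont V /\ V a = 0 /\
              forall x, a <= x <= b -> Rabs (W x - Phi0 x) <= e /\ Rabs (V x - Phi0 x) <= e /\
                                     W b <= I + e.
Proof.
  intros e He.
  destruct (integral_approx h a b I HI) as [HWI [HVI Hap]].
  destruct (Hap (e/2) ltac:(lra)) as [W0 [V0 [HW0 [HV0 [HW0v HV0v]]]]].
  destruct (major_ext a b h W0 ltac:(lra) HW0) as [HW1 HW1c].
  destruct (minor_ext a b h V0 ltac:(lra) HV0) as [HV1 HV1c].
  exists (fun x => ext a b W0 x + - W0 a), (fun x => ext a b V0 x + - V0 a).
  assert (Ea : ext a b W0 a = W0 a) by (apply ext_agree; lra).
  assert (Ea' : ext a b V0 a = V0 a) by (apply ext_agree; lra).
  split. apply major_shift; auto.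
  split. apply cont_plus; auto; apply cont_const.
  split. lra.
  split. apply minor_shift; auto.
  split. apply cont_plus; auto; apply cont_const.
  split. lra.
  intros x Hx. rewrite !ext_agree by lra.
  assert (Hc1 : forall W V, major_function a b h W -> minor_function a b h V -> V x - V a <= W x - W a).
  { intros W V HW HV. apply (compare a b h W V a x); auto; lra. }
  destruct (glb_bounds (fun w => exists W, major_function a b h W /\ w = W x - W a) (V0 x - V0 a) (W0 x - W0 a))
    as [G1 G2].
  { exists W0; auto. }
  { intros w [W [HW ->]]. apply Hc1; auto. }
  specialize (G2 (W0 x - W0 a) (ex_intro _ W0 (conj HW0 eq_refl))).
  fold (Phi0 x) in G1, G2.
  pose proof (compare a b h W0 V0 x b Hab HW0 HV0 ltac:(lra) ltac:(lra) ltac:(lra)).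
  pose proof (HWI W0 HW0). pose proof (HVI V0 HV0).
  split; [|split]; try (apply Rabs_le_between; lra). lra.
Qed.

Lemma Phi0_a : Phi0 a = 0.
Proof.
  apply Rle_antisym; apply le_eps; intros e He;
  destruct (Phi0_approx e He) as [W [V [_ [_ [HWa [_ [_ [_ H]]]]]]]];
  destruct (H a ltac:(lra)) as [H1 _]; rewrite HWa in H1; apply Rabs_le_between in H1; lra.
Qed.

Lemma Phi0_b : Phi0 b = I.
Proof.
  destruct (integral_approx h a b I HI) as [HWI _].
  apply Rle_antisym; apply le_eps; intros e He;
  destruct (Phi0_approx (e/2) ltac:(lra)) as [W [V [HW [_ [HWa [_ [_ [_ H]]]]]]]];
  destruct (H b ltac:(lra)) as [H1 [_ H2]]; apply Rabs_le_between in H1;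
  pose proof (HWI W HW); rewrite HWa in *; lra.
Qed.

Definition Phi := ext a b Phi0.

Lemma Phi_cont : cont Phi.
Proof.
  apply unif_cont. intros e He.
  destruct (Phi0_approx e He) as [W [V [HW [HWc [HWa [_ [_ [_ H]]]]]]]].
  exists (ext a b W). split.
  - intros x. unfold ext. apply (continuous_comp (clamp a b) W).
    apply filterlim_locally. intros eps. exists eps. intros y Hy. apply ballR. apply ballR in Hy.
    eapply Rle_lt_trans; [apply clamp_lip; lra|exact Hy].
    apply HWc.
  - intros x. unfold ext, Phi, ext. apply H. apply clamp_in. lra.
Qed.

Lemma prim_value (phi phi' : R -> R) : (forall x, is_derive phi x (phi' x)) -> cont phi' ->
  (forall x, a <= x <= b -> 0 < phi x) ->
  is_laplace_integral (fun x => h x * phi x) a b (I * phi b - RInt (fun t => Phi t * phi' t) a b).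
Proof.
  intros Hd Hc Hpos.
  destruct (bounded_on phi' a b ltac:(lra) Hc) as [C0 HC0].
  set (K := Rabs (phi b) + (b - a) * Rabs C0 + 1).
  assert (HK : 0 < K) by (unfold K; pose proof (Rabs_pos (phi b)); pose proof (Rabs_pos C0);
     assert (0 <= (b - a) * Rabs C0) by (apply Rmult_le_pos; lra); lra).
  assert (HPc := Phi_cont).
  assert (Hval : forall W, cont W -> W a = 0 -> forall e, 0 <= e -> (forall x, a <= x <= b -> Rabs (W x - Phi0 x) <= e) ->
     Rabs ((prodM a W phi phi' b - prodM a W phi phi' a) - (I * phi b - RInt (fun t => Phi t * phi' t) a b)) <= e * K).
  { intros W HWc HWa e He HWe. unfold prodM.
    assert (Hz : RInt (fun t => W t * phi' t) a a = 0) by (apply (RInt_point (V := R_CompleteNormedModule))).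
    rewrite Hz, HWa.
    rewrite <- Phi0_b.
    replace (W b * phi b - RInt (fun t : R => W t * phi' t) a b - (0 * phi a - 0) -
      (Phi0 b * phi b - RInt (fun t : R => Phi t * phi' t) a b)) with
      ((W b - Phi0 b) * phi b - (RInt (fun t : R => W t * phi' t) a b - RInt (fun t : R => Phi t * phi' t) a b)) by ring.
    rewrite <- RInt_minusR by (apply exR, cont_mult; auto).
    eapply Rle_trans. apply Rabs_triang. rewrite Rabs_Ropp, Rabs_mult.
    assert (H1 : Rabs (W b - Phi0 b) * Rabs (phi b) <= e * Rabs (phi b)).
    { apply Rmult_le_compat_r. apply Rabs_pos. apply HWe; lra. }
    assert (H2 : Rabs (RInt (fun x : R => W x * phi' x - Phi x * phi' x) a b) <= (b - a) * (e * Rabs C0)).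
    { apply abs_RInt_le_const. lra. apply exR. apply cont_minus; apply cont_mult; auto.
      intros t Ht. replace (W t * phi' t - Phi t * phi' t) with ((W t - Phi t) * phi' t) by ring.
      rewrite Rabs_mult. apply Rmult_le_compat; try apply Rabs_pos.
      unfold Phi. rewrite ext_agree by lra. apply HWe; lra.
      eapply Rle_trans. apply HC0; auto. apply Rle_abs. }
    unfold K. assert (0 <= e * 1) by lra. nra. }
  apply squeeze_integral.
  - intros M N HM HN. apply (compare a b (fun x => h x * phi x) M N a b); auto; lra.
  - intros e He. destruct (Phi0_approx (e / K) ltac:(apply Rdiv_lt_0_compat; lra)) as [W [V [HW [HWc [HWa [_ [_ [_ H]]]]]]]].
    exists (prodM a W phi phi'). split. apply major_prod; auto.
    specialize (Hval W HWc HWa (e / K) ltac:(apply Rlt_le, Rdiv_lt_0_compat; lra) (fun x Hx => proj1 (H x Hx))).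
    replace (e / K * K) with e in Hval by (field; lra). apply Rabs_le_between in Hval. lra.
  - intros e He. destruct (Phi0_approx (e / K) ltac:(apply Rdiv_lt_0_compat; lra)) as [W [V [_ [_ [_ [HV [HVc [HVa H]]]]]]]].
    exists (prodM a V phi phi'). split. apply minor_prod; auto.
    specialize (Hval V HVc HVa (e / K) ltac:(apply Rlt_le, Rdiv_lt_0_compat; lra) (fun x Hx => proj1 (proj2 (H x Hx)))).
    replace (e / K * K) with e in Hval by (field; lra). apply Rabs_le_between in Hval. lra.
Qed.

End Prim.

Lemma laplace_main a b h I : a < b -> is_laplace_integral h a b I ->
  exists Phi : R -> R, cont Phi /\ forall (phi phi' : R -> R), (forall x, is_derive phi x (phi' x)) -> cont phi' ->
    (forall x, a <= x <= b -> 0 < phi x) ->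
    is_laplace_integral (fun x => h x * phi x) a b (I * phi b - RInt (fun t => Phi t * phi' t) a b).
Proof.
  intros Hab HI. exists (Phi a b h). split.
  apply (Phi_cont a b h I Hab HI).
  intros. apply prim_value; auto.
Qed.

Lemma isd_eq (f : R -> R) (x l l' : R) : is_derive f x l -> l = l' -> is_derive f x l'.
Proof. intros H ->. exact H. Qed.
Lemma isd_plus (f g : R -> R) (x df dg : R) : is_derive f x df -> is_derive g x dg ->
  is_derive (fun t => f t + g t) x (df + dg).
Proof. intros. apply (is_derive_plus f g); auto. Qed.
Lemma isd_minus (f g : R -> R) (x df dg : R) : is_derive f x df -> is_derive g x dg ->
  is_derive (fun t => f t - g t) x (df - dg).
Proof. intros. apply (is_derive_minus f g); auto. Qed.
Lemma isd_mult (f g : R -> R) (x df dg : R) : is_derive f x df -> is_derive g x dg ->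
  is_derive (fun t => f t * g t) x (df * g x + f x * dg).
Proof. intros. apply (is_derive_mult f g); auto. intros; apply Rmult_comm. Qed.
Lemma isd_const (c x : R) : is_derive (fun _ => c) x 0.
Proof. apply (is_derive_const (K := R_AbsRing) (V := R_NormedModule)). Qed.
Lemma isd_id (x : R) : is_derive (fun t => t) x 1.
Proof. apply (is_derive_id (K := R_AbsRing)). Qed.

Definition nrm (X Y : R) := X * X + Y * Y.

Fixpoint cre (n : nat) (X Y : R) {struct n} : R :=
  match n with O => 1 | S m => (cre m X Y * X + cim m X Y * Y) / nrm X Y end
with cim (n : nat) (X Y : R) {struct n} : R :=
  match n with O => 0 | S m => (cim m X Y * X - cre m X Y * Y) / nrm X Y end.

Lemma nrm_pos X Y : nrm X Y <> 0 -> 0 < nrm X Y.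
Proof. unfold nrm. intros H. destruct (Rle_lt_dec (X * X + Y * Y) 0); auto. exfalso. apply H. nra. Qed.

Lemma cre_derive n X Y : nrm X Y <> 0 ->
  is_derive (fun X => cre n X Y) X (- INR n * cre (S n) X Y) /\
  is_derive (fun X => cim n X Y) X (- INR n * cim (S n) X Y) /\
  is_derive (fun Y => cre n X Y) Y (INR n * cim (S n) X Y) /\
  is_derive (fun Y => cim n X Y) Y (- INR n * cre (S n) X Y).
Proof.
  intros Hn. induction n as [|n [IH1 [IH2 [IH3 IH4]]]].
  - simpl. split; [|split; [|split]]; (eapply isd_eq; [apply isd_const|]); ring.
  - assert (Hnx : is_derive (fun X => nrm X Y) X (2 * X)).
    { unfold nrm. eapply isd_eq. apply isd_plus. apply isd_mult; apply isd_id. apply isd_const. cbv beta; ring. }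
    assert (Hny : is_derive (fun Y => nrm X Y) Y (2 * Y)).
    { unfold nrm. eapply isd_eq. apply isd_plus. apply isd_const. apply isd_mult; apply isd_id. cbv beta; ring. }
    rewrite S_INR.
    change (fun X0 => cre (S n) X0 Y) with (fun X0 => (cre n X0 Y * X0 + cim n X0 Y * Y) / nrm X0 Y).
    change (fun X0 => cim (S n) X0 Y) with (fun X0 => (cim n X0 Y * X0 - cre n X0 Y * Y) / nrm X0 Y).
    change (fun Y0 => cre (S n) X Y0) with (fun Y0 => (cre n X Y0 * X + cim n X Y0 * Y0) / nrm X Y0).
    change (fun Y0 => cim (S n) X Y0) with (fun Y0 => (cim n X Y0 * X - cre n X Y0 * Y0) / nrm X Y0).
    cbn [cre cim]. cbn [cre cim] in IH1, IH2, IH3, IH4.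
    set (c := cre n X Y) in *. set (d := cim n X Y) in *.
    split; [|split; [|split]].
    + eapply isd_eq. apply (is_derive_div _ _ _ _ _ (isd_plus _ _ _ _ _ (isd_mult _ _ _ _ _ IH1 (isd_id X)) (isd_mult _ _ _ _ _ IH2 (isd_const Y X))) Hnx Hn).
      cbv beta. fold c d. unfold nrm in *. field. auto.
    + eapply isd_eq. apply (is_derive_div _ _ _ _ _ (isd_minus _ _ _ _ _ (isd_mult _ _ _ _ _ IH2 (isd_id X)) (isd_mult _ _ _ _ _ IH1 (isd_const Y X))) Hnx Hn).
      cbv beta. fold c d. unfold nrm in *. field. auto.
    + eapply isd_eq. apply (is_derive_div _ _ _ _ _ (isd_plus _ _ _ _ _ (isd_mult _ _ _ _ _ IH3 (isd_const X Y)) (isd_mult _ _ _ _ _ IH4 (isd_id Y))) Hny Hn).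
      cbv beta. fold c d. unfold nrm in *. field. auto.
    + eapply isd_eq. apply (is_derive_div _ _ _ _ _ (isd_minus _ _ _ _ _ (isd_mult _ _ _ _ _ IH4 (isd_const X Y)) (isd_mult _ _ _ _ _ IH3 (isd_id Y))) Hny Hn).
      cbv beta. fold c d. unfold nrm in *. field. auto.
Qed.

Lemma cre_cont {U : UniformSpace} n (fX fY : U -> R) p : continuous fX p -> continuous fY p ->
  nrm (fX p) (fY p) <> 0 ->
  continuous (fun q => cre n (fX q) (fY q)) p /\ continuous (fun q => cim n (fX q) (fY q)) p.
Proof.
  intros HX HY Hn.
  assert (Hnc : continuous (fun q => / nrm (fX q) (fY q)) p).
  { apply (continuous_comp (fun q => nrm (fX q) (fY q)) Rinv).
    unfold nrm. apply (continuous_plus (fun q => fX q * fX q) (fun q => fY q * fY q)).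
    apply (continuous_mult fX fX); auto. apply (continuous_mult fY fY); auto.
    apply continuous_Rinv; auto. }
  induction n as [|n [IH1 IH2]]; simpl.
  - split; apply continuous_const.
  - split; unfold Rdiv.
    + apply (continuous_mult (fun q => cre n (fX q) (fY q) * fX q + cim n (fX q) (fY q) * fY q)
              (fun q => / nrm (fX q) (fY q))); auto.
      apply (continuous_plus (fun q => cre n (fX q) (fY q) * fX q) (fun q => cim n (fX q) (fY q) * fY q)).
      apply (continuous_mult (fun q => cre n (fX q) (fY q)) fX); auto.
      apply (continuous_mult (fun q => cim n (fX q) (fY q)) fY); auto.
    + apply (continuous_mult (fun q => cim n (fX q) (fY q) * fX q - cre n (fX q) (fY q) * fY q)
              (fun q => / nrm (fX q) (fY q))); auto.
      apply (continuous_minus (fun q => cim n (fX q) (fY q) * fX q) (fun q => cre n (fX q) (fY q) * fY q)).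
      apply (continuous_mult (fun q => cim n (fX q) (fY q)) fX); auto.
      apply (continuous_mult (fun q => cre n (fX q) (fY q)) fY); auto.
Qed.

Definition cont3 (K : R -> R -> R -> R) (x y t : R) : Prop :=
  continuous (fun p : (R * R) * R => K (fst (fst p)) (snd (fst p)) (snd p)) ((x, y), t).

Lemma c3_x (q : (R * R) * R) : continuous (fun p : (R * R) * R => fst (fst p)) q.
Proof.
  destruct q as [[x y] t]. apply (continuous_comp (fun p : (R*R)*R => fst p) fst).
  apply continuous_fst. apply continuous_fst.
Qed.
Lemma c3_y (q : (R * R) * R) : continuous (fun p : (R * R) * R => snd (fst p)) q.
Proof.
  destruct q as [[x y] t]. apply (continuous_comp (fun p : (R*R)*R => fst p) snd).
  apply continuous_fst. apply continuous_snd.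
Qed.
Lemma c3_t (q : (R * R) * R) : continuous (fun p : (R * R) * R => snd p) q.
Proof. destruct q as [[x y] t]. apply continuous_snd. Qed.

Lemma c3_comp_t (f : R -> R) (q : (R * R) * R) : (forall z, continuous f z) ->
  continuous (fun p : (R * R) * R => f (snd p)) q.
Proof. intros Hf. apply (continuous_comp (fun p : (R*R)*R => snd p) f). apply c3_t. apply Hf. Qed.

Definition T (n : nat) (A1 A2 Wc Ws : R -> R) (x y t : R) : R :=
  A1 t * cre n (x - Wc t) (y - Ws t) - A2 t * cim n (x - Wc t) (y - Ws t).

Lemma T_cont3 n A1 A2 Wc Ws x y t :
  (forall z, continuous A1 z) -> (forall z, continuous A2 z) ->
  (forall z, continuous Wc z) -> (forall z, continuous Ws z) ->
  nrm (x - Wc t) (y - Ws t) <> 0 -> cont3 (T n A1 A2 Wc Ws) x y t.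
Proof.
  intros H1 H2 H3 H4 Hn. unfold cont3, T.
  set (fX := fun p : (R*R)*R => fst (fst p) - Wc (snd p)).
  set (fY := fun p : (R*R)*R => snd (fst p) - Ws (snd p)).
  assert (HX : continuous fX ((x, y), t)).
  { unfold fX. apply (continuous_minus (fun p : (R*R)*R => fst (fst p)) (fun p => Wc (snd p))).
    apply c3_x. apply c3_comp_t; auto. }
  assert (HY : continuous fY ((x, y), t)).
  { unfold fY. apply (continuous_minus (fun p : (R*R)*R => snd (fst p)) (fun p => Ws (snd p))).
    apply c3_y. apply c3_comp_t; auto. }
  destruct (cre_cont n fX fY ((x, y), t) HX HY Hn) as [Cr Ci].
  apply (continuous_minus (fun p : (R*R)*R => A1 (snd p) * cre n (fX p) (fY p))
                          (fun p : (R*R)*R => A2 (snd p) * cim n (fX p) (fY p))).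
  apply (continuous_mult (fun p : (R*R)*R => A1 (snd p)) (fun p => cre n (fX p) (fY p))); auto.
  apply c3_comp_t; auto.
  apply (continuous_mult (fun p : (R*R)*R => A2 (snd p)) (fun p => cim n (fX p) (fY p))); auto.
  apply c3_comp_t; auto.
Qed.

Lemma shift_derive (f : R -> R) (c x l : R) : is_derive f (x - c) l -> is_derive (fun z => f (z - c)) x l.
Proof.
  intros H. eapply isd_eq. apply (is_derive_comp f (fun z => z - c)). exact H.
  eapply isd_eq. apply isd_minus. apply isd_id. apply isd_const. reflexivity.
  change (scal (1 - 0) l = l). unfold scal; simpl. unfold mult; simpl. ring.
Qed.

Lemma T_dx n A1 A2 Wc Ws x y t : nrm (x - Wc t) (y - Ws t) <> 0 ->
  is_derive (fun x' => T n A1 A2 Wc Ws x' y t) x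
    (T (S n) (fun t => - INR n * A1 t) (fun t => - INR n * A2 t) Wc Ws x y t).
Proof.
  intros Hn. destruct (cre_derive n (x - Wc t) (y - Ws t) Hn) as [D1 [D2 _]].
  unfold T. eapply isd_eq. apply isd_minus.
  apply isd_mult. apply isd_const. apply (shift_derive (fun X => cre n X (y - Ws t))). exact D1.
  apply isd_mult. apply isd_const. apply (shift_derive (fun X => cim n X (y - Ws t))). exact D2.
  cbv beta. ring.
Qed.

Lemma T_dy n A1 A2 Wc Ws x y t : nrm (x - Wc t) (y - Ws t) <> 0 ->
  is_derive (fun y' => T n A1 A2 Wc Ws x y' t) y
    (T (S n) (fun t => INR n * A2 t) (fun t => - INR n * A1 t) Wc Ws x y t).
Proof.
  intros Hn. destruct (cre_derive n (x - Wc t) (y - Ws t) Hn) as [_ [_ [D3 D4]]].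
  unfold T. eapply isd_eq. apply isd_minus.
  apply isd_mult. apply isd_const. apply (shift_derive (fun Y => cre n (x - Wc t) Y)). exact D3.
  apply isd_mult. apply isd_const. apply (shift_derive (fun Y => cim n (x - Wc t) Y)). exact D4.
  cbv beta. ring.
Qed.

Definition good (D : R -> R -> Prop) (H Hx Hy Hxx Hxy Hyx Hyy : R -> R -> R -> R) : Prop :=
  forall x y t, D x y ->
  is_derive (fun x' => H x' y t) x (Hx x y t) /\ is_derive (fun y' => H x y' t) y (Hy x y t) /\
  is_derive (fun x' => Hx x' y t) x (Hxx x y t) /\ is_derive (fun y' => Hx x y' t) y (Hxy x y t) /\
  is_derive (fun x' => Hy x' y t) x (Hyx x y t) /\ is_derive (fun y' => Hy x y' t) y (Hyy x y t) /\
  cont3 H x y t /\ cont3 Hx x y t /\ cont3 Hy x y t /\ cont3 Hxx x y t /\ cont3 Hxy x y t /\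
  cont3 Hyx x y t /\ cont3 Hyy x y t.

Definition add3 (F G : R -> R -> R -> R) := fun x y t => F x y t + G x y t.

Lemma cont3_plus F G x y t : cont3 F x y t -> cont3 G x y t -> cont3 (add3 F G) x y t.
Proof.
  intros HF HG. unfold cont3, add3.
  apply (continuous_plus (fun p : (R*R)*R => F (fst (fst p)) (snd (fst p)) (snd p))
                         (fun p : (R*R)*R => G (fst (fst p)) (snd (fst p)) (snd p))); auto.
Qed.

Lemma good_plus D H Hx Hy Hxx Hxy Hyx Hyy G Gx Gy Gxx Gxy Gyx Gyy :
  good D H Hx Hy Hxx Hxy Hyx Hyy -> good D G Gx Gy Gxx Gxy Gyx Gyy ->
  good D (add3 H G) (add3 Hx Gx) (add3 Hy Gy) (add3 Hxx Gxx) (add3 Hxy Gxy) (add3 Hyx Gyx) (add3 Hyy Gyy).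
Proof.
  intros HH HG x y t Hd.
  destruct (HH x y t Hd) as [a1 [a2 [a3 [a4 [a5 [a6 [b1 [b2 [b3 [b4 [b5 [b6 b7]]]]]]]]]]]].
  destruct (HG x y t Hd) as [c1 [c2 [c3 [c4 [c5 [c6 [d1 [d2 [d3 [d4 [d5 [d6 d7]]]]]]]]]]]].
  exact (conj (isd_plus _ _ _ _ _ a1 c1) (conj (isd_plus _ _ _ _ _ a2 c2) (conj (isd_plus _ _ _ _ _ a3 c3)
    (conj (isd_plus _ _ _ _ _ a4 c4) (conj (isd_plus _ _ _ _ _ a5 c5) (conj (isd_plus _ _ _ _ _ a6 c6)
    (conj (cont3_plus _ _ _ _ _ b1 d1) (conj (cont3_plus _ _ _ _ _ b2 d2) (conj (cont3_plus _ _ _ _ _ b3 d3)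
    (conj (cont3_plus _ _ _ _ _ b4 d4) (conj (cont3_plus _ _ _ _ _ b5 d5) (conj (cont3_plus _ _ _ _ _ b6 d6)
    (cont3_plus _ _ _ _ _ b7 d7))))))))))))).
Qed.

Definition zero3 : R -> R -> R -> R := fun _ _ _ => 0.

Lemma good_const D (k : R -> R) : (forall z, continuous k z) ->
  good D (fun _ _ t => k t) zero3 zero3 zero3 zero3 zero3 zero3.
Proof.
  intros Hk x y t _.
  assert (C0 : cont3 zero3 x y t) by (apply continuous_const).
  assert (Ck : cont3 (fun _ _ t => k t) x y t) by (apply c3_comp_t; auto).
  unfold zero3.
  exact (conj (isd_const _ _) (conj (isd_const _ _) (conj (isd_const _ _) (conj (isd_const _ _)
    (conj (isd_const _ _) (conj (isd_const _ _) (conj Ck (conj C0 (conj C0 (conj C0 (conj C0 (conj C0 C0)))))))))))).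
Qed.

Definition sc (c : R) (A : R -> R) := fun t => c * A t.

Lemma cont_sc c A : (forall z, continuous A z) -> forall z, continuous (sc c A) z.
Proof. intros H z. unfold sc. apply (continuous_mult (fun _ => c) A). apply continuous_const. auto. Qed.

Lemma good_T D n A1 A2 Wc Ws :
  (forall z, continuous A1 z) -> (forall z, continuous A2 z) ->
  (forall z, continuous Wc z) -> (forall z, continuous Ws z) ->
  (forall x y t, D x y -> nrm (x - Wc t) (y - Ws t) <> 0) ->
  let n1 := INR n in let n2 := INR (S n) in
  good D (T n A1 A2 Wc Ws)
    (T (S n) (sc (- n1) A1) (sc (- n1) A2) Wc Ws)
    (T (S n) (sc n1 A2) (sc (- n1) A1) Wc Ws)
    (T (S (S n)) (sc (- n2) (sc (- n1) A1)) (sc (- n2) (sc (- n1) A2)) Wc Ws)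
    (T (S (S n)) (sc n2 (sc (- n1) A2)) (sc (- n2) (sc (- n1) A1)) Wc Ws)
    (T (S (S n)) (sc (- n2) (sc n1 A2)) (sc (- n2) (sc (- n1) A1)) Wc Ws)
    (T (S (S n)) (sc n2 (sc (- n1) A1)) (sc (- n2) (sc n1 A2)) Wc Ws).
Proof.
  intros H1 H2 H3 H4 Hn n1 n2 x y t Hd.
  specialize (Hn x y t Hd).
  assert (C : forall m B1 B2, (forall z, continuous B1 z) -> (forall z, continuous B2 z) ->
     cont3 (T m B1 B2 Wc Ws) x y t) by (intros; apply T_cont3; auto).
  split. apply (T_dx n A1 A2 Wc Ws x y t Hn).
  split. apply (T_dy n A1 A2 Wc Ws x y t Hn).
  split. apply (T_dx (S n) _ _ Wc Ws x y t Hn).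
  split. apply (T_dy (S n) _ _ Wc Ws x y t Hn).
  split. apply (T_dx (S n) _ _ Wc Ws x y t Hn).
  split. apply (T_dy (S n) _ _ Wc Ws x y t Hn).
  repeat split; apply C; repeat apply cont_sc; auto.
Qed.

Lemma T_lap n A1 A2 Wc Ws x y t :
  let n1 := INR n in let n2 := INR (S n) in
  T (S (S n)) (sc (- n2) (sc (- n1) A1)) (sc (- n2) (sc (- n1) A2)) Wc Ws x y t +
  T (S (S n)) (sc n2 (sc (- n1) A1)) (sc (- n2) (sc n1 A2)) Wc Ws x y t = 0.
Proof. intros. unfold T, sc. ring. Qed.

Lemma ballR' x e y : @ball R_UniformSpace x e y <-> Rabs (y - x) < e.
Proof. split; intros H; exact H. Qed.

Lemma cont3_ed K x y t : cont3 K x y t -> forall eps, 0 < eps -> exists d, 0 < d /\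
  forall x' y' t', Rabs (x' - x) < d -> Rabs (y' - y) < d -> Rabs (t' - t) < d ->
    Rabs (K x' y' t' - K x y t) < eps.
Proof.
  intros H eps He.
  destruct (proj1 (filterlim_locally _ _) H (mkposreal eps He)) as [d Hd].
  exists d. split. apply cond_pos. intros x' y' t' H1 H2 H3.
  specialize (Hd ((x', y'), t')). apply ballR' in Hd. exact Hd.
  split; [split|]; apply ballR'; auto.
Qed.

Lemma cont3_t K x y t : cont3 K x y t -> continuous (fun s => K x y s) t.
Proof.
  intros H. apply filterlim_locally. intros eps.
  destruct (cont3_ed K x y t H eps (cond_pos eps)) as [d [Hd Hd']].
  exists (mkposreal d Hd). intros s Hs. apply ballR' in Hs. apply ballR'.
  apply Hd'; simpl in *; auto; rewrite Rminus_eq_0, Rabs_R0; auto.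
Qed.

Lemma cont3_2dx K x y t : cont3 K x y t -> continuity_2d_pt (fun u v => K u y v) x t.
Proof.
  intros H eps. destruct (cont3_ed K x y t H eps (cond_pos eps)) as [d [Hd Hd']].
  exists (mkposreal d Hd). intros u v Hu Hv. apply Hd'; simpl in *; auto; rewrite Rminus_eq_0, Rabs_R0; auto.
Qed.

Lemma cont3_2dy K x y t : cont3 K x y t -> continuity_2d_pt (fun u v => K x u v) y t.
Proof.
  intros H eps. destruct (cont3_ed K x y t H eps (cond_pos eps)) as [d [Hd Hd']].
  exists (mkposreal d Hd). intros u v Hu Hv. apply Hd'; simpl in *; auto; rewrite Rminus_eq_0, Rabs_R0; auto.
Qed.

Lemma exRI (f : R -> R) a b : (forall t, continuous f t) -> ex_RInt f a b.
Proof. intros H. apply (ex_RInt_continuous (V := R_CompleteNormedModule)). intros; apply H. Qed.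

Lemma param_cont K a b x0 y0 e : a <= b -> 0 < e ->
  (forall x y t, Rabs (x - x0) < e -> Rabs (y - y0) < e -> cont3 K x y t) ->
  @continuous (prod_UniformSpace R_UniformSpace R_UniformSpace) R_UniformSpace (fun p : R * R => RInt (K (fst p) (snd p)) a b) (x0, y0).
Proof.
  intros Hab He HK.
  apply filterlim_locally. intros eps.
  set (e' := eps / (4 * (b - a + 1))).
  assert (He' : 0 < e') by (unfold e'; destruct eps; simpl; apply Rdiv_lt_0_compat; lra).
  assert (Hex : forall t, exists d : posreal, forall x' y' t', Rabs (x' - x0) < d -> Rabs (y' - y0) < d ->
             Rabs (t' - t) < d -> Rabs (K x' y' t' - K x0 y0 t) < e').
  { intros t. destruct (cont3_ed K x0 y0 t (HK x0 y0 t ltac:(rewrite Rminus_eq_0, Rabs_R0; lra)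
       ltac:(rewrite Rminus_eq_0, Rabs_R0; lra)) e' He') as [d [Hd Hd']].
    exists (mkposreal d Hd). exact Hd'. }
  set (dl := fun t => proj1_sig (constructive_indefinite_description _ (Hex t))).
  assert (Hdl : forall t x' y' t', Rabs (x' - x0) < dl t -> Rabs (y' - y0) < dl t ->
             Rabs (t' - t) < dl t -> Rabs (K x' y' t' - K x0 y0 t) < e').
  { intros t. unfold dl. destruct (constructive_indefinite_description _ (Hex t)) as [d Hd]. exact Hd. }
  destruct (compactness_value_1d a b dl) as [d Hd].
  assert (Hr : 0 < Rmin d e) by (apply Rmin_glb_lt; [apply cond_pos|lra]).
  exists (mkposreal _ Hr). intros [x y] [Hx Hy]. apply ballR' in Hx. apply ballR' in Hy.
  simpl in Hx, Hy |- *. apply ballR'.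
  assert (Hxd : Rabs (x - x0) < d) by (eapply Rlt_le_trans; [exact Hx|apply Rmin_l]).
  assert (Hyd : Rabs (y - y0) < d) by (eapply Rlt_le_trans; [exact Hy|apply Rmin_l]).
  assert (Hxe : Rabs (x - x0) < e) by (eapply Rlt_le_trans; [exact Hx|apply Rmin_r]).
  assert (Hye : Rabs (y - y0) < e) by (eapply Rlt_le_trans; [exact Hy|apply Rmin_r]).
  assert (Hpt : forall t, a <= t <= b -> Rabs (K x y t - K x0 y0 t) <= 2 * e').
  { intros t Ht. specialize (Hd t Ht). apply NNPP. intros Hn. apply Hd. intros [t' [Ht' [H1 H2]]].
    apply Hn.
    assert (A1 : Rabs (K x y t - K x0 y0 t') < e') by (apply Hdl; lra).
    assert (A2 : Rabs (K x0 y0 t - K x0 y0 t') < e') by (apply Hdl; try rewrite Rminus_eq_0, Rabs_R0; try apply cond_pos; lra).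
    apply Rabs_lt_between in A1. apply Rabs_lt_between in A2. apply Rabs_le_between. lra. }
  assert (Hc1 : ex_RInt (K x y) a b) by (apply exRI; intros; apply cont3_t; apply HK; auto).
  assert (Hc0 : ex_RInt (K x0 y0) a b) by (apply exRI; intros; apply cont3_t; apply HK; rewrite Rminus_eq_0, Rabs_R0; lra).
  change (minus ?u ?v) with (u - v).
  replace (RInt (K x y) a b - RInt (K x0 y0) a b) with (RInt (fun t => K x y t - K x0 y0 t) a b).
  2:{ apply (RInt_minus (V := R_CompleteNormedModule) (K x y) (K x0 y0) a b); auto. }
  eapply Rle_lt_trans. apply abs_RInt_le_const; auto.
  apply (ex_RInt_minus (V := R_NormedModule) (K x y) (K x0 y0)); auto.
  assert ((b - a) * (2 * e') = eps * ((b - a) / (2 * (b - a + 1)))).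
  { unfold e'. field. lra. }
  rewrite H. destruct eps as [eps Heps]; simpl.
  assert ((b - a) / (2 * (b - a + 1)) < 1).
  { apply Rmult_lt_reg_r with (2 * (b - a + 1)). lra. unfold Rdiv. rewrite Rmult_assoc, Rinv_l by lra. lra. }
  assert (0 <= (b - a) / (2 * (b - a + 1))) by (apply Rmult_le_pos; [lra|apply Rlt_le, Rinv_0_lt_compat; lra]).
  nra.
Qed.

Lemma param_deriv (f f' : R -> R -> R) a b x0 e : 0 < e ->
  (forall u t, Rabs (u - x0) < e -> is_derive (fun z => f z t) u (f' u t)) ->
  (forall u t, Rabs (u - x0) < e -> continuous (fun s => f u s) t) ->
  (forall t, continuity_2d_pt f' x0 t) ->
  is_derive (fun x => RInt (f x) a b) x0 (RInt (f' x0) a b).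
Proof.
  intros He Hd Hc H2.
  assert (Hloc : forall P : R -> Prop, (forall u, Rabs (u - x0) < e -> P u) -> locally x0 P).
  { intros P HP. exists (mkposreal e He). intros u Hu. apply HP. apply ballR' in Hu. exact Hu. }
  assert (Hx0 : Rabs (x0 - x0) < e) by (rewrite Rminus_eq_0, Rabs_R0; lra).
  assert (E : RInt (f' x0) a b = RInt (fun t => Derive (fun u => f u t) x0) a b).
  { apply RInt_ext. intros t _. symmetry. apply is_derive_unique. apply Hd; auto. }
  rewrite E.
  apply (is_derive_RInt_param f a b x0).
  - apply Hloc. intros u Hu t _. exists (f' u t). apply Hd; auto.
  - intros t _. apply (continuity_2d_pt_ext_loc f').
    exists (mkposreal e He). intros u v Hu Hv. symmetry. apply is_derive_unique. apply Hd. exact Hu.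
    apply H2.
  - apply Hloc. intros u Hu. apply exRI. intros t. apply Hc; auto.
Qed.

Definition opn (D : R -> R -> Prop) := forall x y, D x y -> exists e, 0 < e /\
  forall x' y', Rabs (x' - x) < e -> Rabs (y' - y) < e -> D x' y'.

Section Harm.
Variables (D : R -> R -> Prop) (H Hx Hy Hxx Hxy Hyx Hyy : R -> R -> R -> R) (a b : R).
Hypotheses (Hab : a <= b) (HD : opn D) (Hg : good D H Hx Hy Hxx Hxy Hyx Hyy)
  (Hlap : forall x y t, D x y -> Hxx x y t + Hyy x y t = 0).

Let U : R -> R -> R := fun x y => RInt (H x y) a b.

Lemma derX (K K' : R -> R -> R -> R) :
  (forall x y t, D x y -> is_derive (fun x' => K x' y t) x (K' x y t)) ->
  (forall x y t, D x y -> cont3 K x y t) -> (forall x y t, D x y -> cont3 K' x y t) ->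
  forall x y, D x y -> is_derive (fun u => RInt (K u y) a b) x (RInt (K' x y) a b).
Proof.
  intros Hd HK HK' x y Hin. destruct (HD x y Hin) as [e [He He']].
  apply (param_deriv (fun u t => K u y t) (fun u t => K' u y t) a b x e He).
  - intros u t Hu. apply Hd. apply He'; auto. rewrite Rminus_eq_0, Rabs_R0; lra.
  - intros u t Hu. apply cont3_t. apply HK. apply He'; auto. rewrite Rminus_eq_0, Rabs_R0; lra.
  - intros t. apply cont3_2dx. apply HK'; auto.
Qed.

Lemma derY (K K' : R -> R -> R -> R) :
  (forall x y t, D x y -> is_derive (fun y' => K x y' t) y (K' x y t)) ->
  (forall x y t, D x y -> cont3 K x y t) -> (forall x y t, D x y -> cont3 K' x y t) ->
  forall x y, D x y -> is_derive (fun u => RInt (K x u) a b) y (RInt (K' x y) a b).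
Proof.
  intros Hd HK HK' x y Hin. destruct (HD x y Hin) as [e [He He']].
  apply (param_deriv (fun u t => K x u t) (fun u t => K' x u t) a b y e He).
  - intros u t Hu. apply Hd. apply He'; auto. rewrite Rminus_eq_0, Rabs_R0; lra.
  - intros u t Hu. apply cont3_t. apply HK. apply He'; auto. rewrite Rminus_eq_0, Rabs_R0; lra.
  - intros t. apply cont3_2dy. apply HK'; auto.
Qed.

Lemma locx x y : D x y -> forall (P : R -> Prop), (forall u, D u y -> P u) -> locally x P.
Proof.
  intros Hin P HP. destruct (HD x y Hin) as [e [He He']]. exists (mkposreal e He).
  intros u Hu. apply ballR' in Hu. apply HP. apply He'; auto. rewrite Rminus_eq_0, Rabs_R0; lra.
Qed.
Lemma locy x y : D x y -> forall (P : R -> Prop), (forall u, D x u -> P u) -> locally y P.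
Proof.
  intros Hin P HP. destruct (HD x y Hin) as [e [He He']]. exists (mkposreal e He).
  intros u Hu. apply ballR' in Hu. apply HP. apply He'; auto. rewrite Rminus_eq_0, Rabs_R0; lra.
Qed.
Lemma locxy x y : D x y -> forall (P : R * R -> Prop), (forall u v, D u v -> P (u, v)) -> locally (x, y) P.
Proof.
  intros Hin P HP. destruct (HD x y Hin) as [e [He He']]. exists (mkposreal e He).
  intros [u v] [Hu Hv]. apply ballR' in Hu. apply ballR' in Hv. apply HP. apply He'; auto.
Qed.

Lemma contD K : (forall x y t, D x y -> cont3 K x y t) -> forall x y, D x y ->
  @continuous (prod_UniformSpace R_UniformSpace R_UniformSpace) R_UniformSpace (fun p : R * R => RInt (K (fst p) (snd p)) a b) (x, y).
Proof.
  intros HK x y Hin. destruct (HD x y Hin) as [e [He He']].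
  apply (param_cont K a b x y e); auto.
Qed.

Lemma harm_param : harmonic_on D U.
Proof.
  assert (G : forall x y t, D x y -> _) by exact Hg.
  assert (c_H : forall x y t, D x y -> cont3 H x y t) by (intros; apply Hg; auto).
  assert (c_Hx : forall x y t, D x y -> cont3 Hx x y t) by (intros; apply Hg; auto).
  assert (c_Hy : forall x y t, D x y -> cont3 Hy x y t) by (intros; apply Hg; auto).
  assert (c_Hxx : forall x y t, D x y -> cont3 Hxx x y t) by (intros; apply Hg; auto).
  assert (c_Hxy : forall x y t, D x y -> cont3 Hxy x y t) by (intros; apply Hg; auto).
  assert (c_Hyx : forall x y t, D x y -> cont3 Hyx x y t) by (intros; apply Hg; auto).
  assert (c_Hyy : forall x y t, D x y -> cont3 Hyy x y t) by (intros; apply Hg; auto).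
  assert (d1 := derX H Hx ltac:(intros; apply Hg; auto) c_H c_Hx).
  assert (d2 := derY H Hy ltac:(intros; apply Hg; auto) c_H c_Hy).
  assert (d3 := derX Hx Hxx ltac:(intros; apply Hg; auto) c_Hx c_Hxx).
  assert (d4 := derY Hx Hxy ltac:(intros; apply Hg; auto) c_Hx c_Hxy).
  assert (d5 := derX Hy Hyx ltac:(intros; apply Hg; auto) c_Hy c_Hyx).
  assert (d6 := derY Hy Hyy ltac:(intros; apply Hg; auto) c_Hy c_Hyy).
  assert (eX : forall x y, D x y -> dx U x y = RInt (Hx x y) a b).
  { intros x y Hin. unfold dx, U. apply is_derive_unique. apply d1; auto. }
  assert (eY : forall x y, D x y -> dy U x y = RInt (Hy x y) a b).
  { intros x y Hin. unfold dy, U. apply is_derive_unique. apply d2; auto. }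
  assert (i3 : forall x y, D x y -> is_derive (fun t => dx U t y) x (RInt (Hxx x y) a b)).
  { intros x y Hin. apply (is_derive_ext_loc (fun u => RInt (Hx u y) a b)). apply (locx x y Hin).
    intros u Hu. symmetry. apply eX; auto. apply d3; auto. }
  assert (i4 : forall x y, D x y -> is_derive (fun t => dx U x t) y (RInt (Hxy x y) a b)).
  { intros x y Hin. apply (is_derive_ext_loc (fun u => RInt (Hx x u) a b)). apply (locy x y Hin).
    intros u Hu. symmetry. apply eX; auto. apply d4; auto. }
  assert (i5 : forall x y, D x y -> is_derive (fun t => dy U t y) x (RInt (Hyx x y) a b)).
  { intros x y Hin. apply (is_derive_ext_loc (fun u => RInt (Hy u y) a b)). apply (locx x y Hin).
    intros u Hu. symmetry. apply eY; auto. apply d5; auto. }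
  assert (i6 : forall x y, D x y -> is_derive (fun t => dy U x t) y (RInt (Hyy x y) a b)).
  { intros x y Hin. apply (is_derive_ext_loc (fun u => RInt (Hy x u) a b)). apply (locy x y Hin).
    intros u Hu. symmetry. apply eY; auto. apply d6; auto. }
  assert (eXX : forall x y, D x y -> dx (dx U) x y = RInt (Hxx x y) a b).
  { intros. unfold dx at 1. apply is_derive_unique. apply i3; auto. }
  assert (eXY : forall x y, D x y -> dy (dx U) x y = RInt (Hxy x y) a b).
  { intros. unfold dy at 1. apply is_derive_unique. apply i4; auto. }
  assert (eYX : forall x y, D x y -> dx (dy U) x y = RInt (Hyx x y) a b).
  { intros. unfold dx at 1. apply is_derive_unique. apply i5; auto. }
  assert (eYY : forall x y, D x y -> dy (dy U) x y = RInt (Hyy x y) a b).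
  { intros. unfold dy at 1. apply is_derive_unique. apply i6; auto. }
  intros x y Hin.
  split. exists (RInt (Hx x y) a b). apply d1; auto.
  split. exists (RInt (Hy x y) a b). apply d2; auto.
  split. exists (RInt (Hxx x y) a b). apply i3; auto.
  split. exists (RInt (Hxy x y) a b). apply i4; auto.
  split. exists (RInt (Hyx x y) a b). apply i5; auto.
  split. exists (RInt (Hyy x y) a b). apply i6; auto.
  split. apply (continuous_ext_loc (U := R_UniformSpace) _ (fun p : R * R => RInt (Hxx (fst p) (snd p)) a b)).
    apply (locxy x y Hin). intros u v Huv. simpl. symmetry. apply eXX; auto. apply contD; auto.
  split. apply (continuous_ext_loc (U := R_UniformSpace) _ (fun p : R * R => RInt (Hxy (fst p) (snd p)) a b)).
    apply (locxy x y Hin). intros u v Huv. simpl. symmetry. apply eXY; auto. apply contD; auto.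
  split. apply (continuous_ext_loc (U := R_UniformSpace) _ (fun p : R * R => RInt (Hyx (fst p) (snd p)) a b)).
    apply (locxy x y Hin). intros u v Huv. simpl. symmetry. apply eYX; auto. apply contD; auto.
  split. apply (continuous_ext_loc (U := R_UniformSpace) _ (fun p : R * R => RInt (Hyy (fst p) (snd p)) a b)).
    apply (locxy x y Hin). intros u v Huv. simpl. symmetry. apply eYY; auto. apply contD; auto.
  rewrite eXX, eYY by auto.
  rewrite <- (RInt_plus (V := R_CompleteNormedModule)).
  2,3: apply exRI; intros; apply cont3_t; auto.
  rewrite (RInt_ext (V := R_CompleteNormedModule) _ (fun _ => 0)).
  rewrite RInt_const. apply Rmult_0_r.
  intros t _. apply Hlap; auto.
Qed.

End Harm.

Definition PP (x y t : R) := -1 - 2 * T 1 cos sin cos sin x y t.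
Definition PPt (x y t : R) :=
  T 1 (fun t => 2 * sin t) (fun t => -2 * cos t) cos sin x y t +
  T 2 (fun t => 4 * (cos t * sin t)) (fun t => -2 * (cos t * cos t - sin t * sin t)) cos sin x y t.

Lemma nrm_circ x y t : x ^ 2 + y ^ 2 < 1 -> nrm (x - cos t) (y - sin t) <> 0.
Proof.
  intros H E. unfold nrm in E. pose proof (sin2_cos2 t). unfold Rsqr in H0.
  pose proof (Rle_0_sqr (x - cos t)). pose proof (Rle_0_sqr (y - sin t)). unfold Rsqr in *.
  assert (A : (x - cos t) * (x - cos t) = 0) by lra.
  assert (B : (y - sin t) * (y - sin t) = 0) by lra.
  apply Rmult_integral in A. apply Rmult_integral in B.
  assert (x = cos t) by (destruct A; lra). assert (y = sin t) by (destruct B; lra). subst. nra.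
Qed.

Lemma nrm_m1 x y : x ^ 2 + y ^ 2 < 1 -> nrm (x - -1) (y - 0) <> 0.
Proof.
  intros H E. unfold nrm in E.
  pose proof (Rle_0_sqr (x - -1)). pose proof (Rle_0_sqr (y - 0)). unfold Rsqr in *.
  assert (A : (x - -1) * (x - -1) = 0) by lra. apply Rmult_integral in A.
  assert (x = -1) by (destruct A; lra). subst. nra.
Qed.

Lemma PP_derive x y t : nrm (x - cos t) (y - sin t) <> 0 -> is_derive (fun t => PP x y t) t (PPt x y t).
Proof.
  intros Hn. unfold PP, PPt, T. simpl cre. simpl cim. unfold nrm in *.
  auto_derive. repeat split; auto.
  field. auto.
Qed.

Lemma poisson_PP r th t : 0 <= r < 1 -> poisson r (th - t) = PP (r * cos th) (r * sin th) t.
Proof.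
  intros Hr. unfold poisson, PP, T. simpl cre. simpl cim.
  set (x := r * cos th). set (y := r * sin th).
  pose proof (sin2_cos2 t) as Et. pose proof (sin2_cos2 th) as Eth. unfold Rsqr in Et, Eth.
  assert (Hxy : x ^ 2 + y ^ 2 < 1).
  { unfold x, y. replace ((r * cos th) ^ 2 + (r * sin th) ^ 2) with (r ^ 2 * (sin th * sin th + cos th * cos th)) by ring.
    rewrite Eth. nra. }
  pose proof (nrm_circ x y t Hxy) as Hn. unfold nrm in Hn.
  assert (E1 : 1 - r ^ 2 = - ((x - cos t) * (x - cos t) + (y - sin t) * (y - sin t)) - 2 * (cos t * (x - cos t) + sin t * (y - sin t))).
  { assert (r ^ 2 = x ^ 2 + y ^ 2).
    { unfold x, y. replace ((r * cos th) ^ 2 + (r * sin th) ^ 2) with (r ^ 2 * (sin th * sin th + cos th * cos th)) by ring.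
      rewrite Eth. ring. }
    rewrite H. nra. }
  assert (E2 : 1 - 2 * r * cos (th - t) + r ^ 2 = (x - cos t) * (x - cos t) + (y - sin t) * (y - sin t)).
  { rewrite cos_minus.
    assert (r ^ 2 = x ^ 2 + y ^ 2).
    { unfold x, y. replace ((r * cos th) ^ 2 + (r * sin th) ^ 2) with (r ^ 2 * (sin th * sin th + cos th * cos th)) by ring.
      rewrite Eth. ring. }
    rewrite H. unfold x, y. nra. }
  rewrite E1, E2. unfold nrm. field. auto.
Qed.

Lemma poisson_pos r u : 0 <= r < 1 -> 0 < poisson r u.
Proof.
  intros Hr. unfold poisson. pose proof (COS_bound u) as [_ Hc].
  assert (0 < 1 - 2 * r * cos u + r ^ 2) by nra.
  apply Rdiv_lt_0_compat; nra.
Qed.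

Lemma disc_open : opn unit_disc.
Proof.
  intros x y H. unfold unit_disc in *.
  set (e := (1 - (x ^ 2 + y ^ 2)) / 8).
  assert (He : 0 < e) by (unfold e; lra).
  exists e. split; auto. intros x' y' Hx Hy.
  apply Rabs_lt_between in Hx. apply Rabs_lt_between in Hy.
  assert (e <= 1/8) by (unfold e; nra).
  assert (-1 <= x <= 1) by nra. assert (-1 <= y <= 1) by nra.
  set (dx := x' - x) in *. set (dy := y' - y) in *.
  replace x' with (x + dx) by (unfold dx; ring). replace y' with (y + dy) by (unfold dy; ring).
  assert (x * dx <= e) by nra. assert (y * dy <= e) by nra.
  assert (dx * dx <= e) by nra. assert (dy * dy <= e) by nra.
  assert ((x + dx) ^ 2 + (y + dy) ^ 2 = x ^ 2 + y ^ 2 + 2 * (x * dx) + 2 * (y * dy) + dx * dx + dy * dy) by ring.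
  unfold e in *. lra.
Qed.

Definition Hk (I : R) : R -> R -> R -> R := fun _ _ t => (fun _ : R => - I / (4 * (PI * PI))) t.
Definition H1 I := T 1 (fun _ => I / (2 * (PI * PI))) (fun _ => 0) (fun _ => -1) (fun _ => 0).
Definition H2 (Phi : R -> R) := T 1 (fun t => - (Phi t * (2 * sin t)) / (2 * PI))
  (fun t => - (Phi t * (-2 * cos t)) / (2 * PI)) cos sin.
Definition H3 (Phi : R -> R) := T 2 (fun t => - (Phi t * (4 * (cos t * sin t))) / (2 * PI))
  (fun t => - (Phi t * (-2 * (cos t * cos t - sin t * sin t))) / (2 * PI)) cos sin.
Definition Hfull I Phi := add3 (Hk I) (add3 (H1 I) (add3 (H2 Phi) (H3 Phi))).

Lemma cont_sin : cont sin. Proof. intros x. apply continuous_sin. Qed.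
Lemma cont_cos : cont cos. Proof. intros x. apply continuous_cos. Qed.

Ltac solve_cont HPc := unfold Rdiv; repeat first [ apply cont_const | apply cont_id | exact HPc | apply cont_sin
  | apply cont_cos | apply cont_mult | apply cont_plus | apply cont_minus | apply cont_opp ].

Lemma Hfull_harm I Phi : cont Phi -> harmonic_on unit_disc (fun x y => RInt (Hfull I Phi x y) (- PI) PI).
Proof.
  intros HPc.
  assert (Hab : - PI <= PI) by (pose proof PI_RGT_0; lra).
  assert (Nc : forall x y t, unit_disc x y -> nrm (x - cos t) (y - sin t) <> 0) by (intros; apply nrm_circ; auto).
  assert (Nm : forall x y t, unit_disc x y -> nrm (x - (fun _ : R => -1) t) (y - (fun _ : R => 0) t) <> 0)
    by (intros; apply nrm_m1; auto).
  assert (g0 := good_const unit_disc (fun _ => - I / (4 * (PI * PI))) (cont_const _)).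
  assert (g1 := good_T unit_disc 1 (fun _ => I / (2 * (PI * PI))) (fun _ => 0) (fun _ => -1) (fun _ => 0)
     (cont_const _) (cont_const _) (cont_const _) (cont_const _) Nm).
  assert (g2 := good_T unit_disc 1 (fun t => - (Phi t * (2 * sin t)) / (2 * PI))
     (fun t => - (Phi t * (-2 * cos t)) / (2 * PI)) cos sin
     ltac:(solve_cont HPc) ltac:(solve_cont HPc) cont_cos cont_sin Nc).
  assert (g3 := good_T unit_disc 2 (fun t => - (Phi t * (4 * (cos t * sin t))) / (2 * PI))
     (fun t => - (Phi t * (-2 * (cos t * cos t - sin t * sin t))) / (2 * PI)) cos sin
     ltac:(solve_cont HPc) ltac:(solve_cont HPc) cont_cos cont_sin Nc).
  cbv zeta in g1, g2, g3.
  assert (g := good_plus _ _ _ _ _ _ _ _ _ _ _ _ _ _ _ g0 (good_plus _ _ _ _ _ _ _ _ _ _ _ _ _ _ _ g1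
     (good_plus _ _ _ _ _ _ _ _ _ _ _ _ _ _ _ g2 g3))).
  apply (harm_param unit_disc _ _ _ _ _ _ _ (- PI) PI Hab disc_open g).
  intros x y t _. unfold add3, zero3.
  unfold T, sc. cbv beta. ring.
Qed.

Lemma disc_polar r th : 0 <= r < 1 -> unit_disc (r * cos th) (r * sin th).
Proof.
  intros Hr. unfold unit_disc. pose proof (sin2_cos2 th). unfold Rsqr in H.
  replace ((r * cos th) ^ 2 + (r * sin th) ^ 2) with (r ^ 2 * (sin th * sin th + cos th * cos th)) by ring.
  rewrite H. nra.
Qed.

Lemma PPt_cont x y : unit_disc x y -> cont (PPt x y).
Proof.
  intros Hd z. unfold PPt.
  apply (continuous_plus (fun t => T 1 (fun t => 2 * sin t) (fun t => -2 * cos t) cos sin x y t)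
    (fun t => T 2 (fun t => 4 * (cos t * sin t)) (fun t => -2 * (cos t * cos t - sin t * sin t)) cos sin x y t)).
  - apply cont3_t. apply T_cont3; try (apply nrm_circ; auto);
    unfold Rdiv; repeat first [ apply cont_const | apply cont_sin | apply cont_cos | apply cont_mult | apply cont_minus ].
  - apply cont3_t. apply T_cont3; try (apply nrm_circ; auto);
    unfold Rdiv; repeat first [ apply cont_const | apply cont_sin | apply cont_cos | apply cont_mult | apply cont_minus ].
Qed.

Theorem theorem10p2 (f : R * R -> R) :
  laplace_integrable (fun t => f (cos t, sin t)) (- PI) PI ->
  (forall r theta, 0 <= r < 1 -> - PI <= theta <= PI ->
     laplace_integrable (fun t => f (cos t, sin t) * poisson r (theta - t)) (- PI) PI)
  /\
  exists u : R -> R -> R,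
    harmonic_on unit_disc u /\
    forall r theta I, 0 <= r < 1 -> - PI <= theta <= PI ->
      is_laplace_integral (fun t => f (cos t, sin t) * poisson r (theta - t)) (- PI) PI I ->
      u (r * cos theta) (r * sin theta) = I / (2 * PI).
Proof.
  intros [I HI].
  assert (Hpi : 0 < PI) by apply PI_RGT_0.
  assert (Hab : - PI < PI) by lra.
  destruct (laplace_main (- PI) PI _ I Hab HI) as [Phi [HPc Hprim]].
  assert (Key : forall r th, 0 <= r < 1 ->
    is_laplace_integral (fun t => f (cos t, sin t) * poisson r (th - t)) (- PI) PI
      (I * poisson r (th - PI) - RInt (fun t => Phi t * PPt (r * cos th) (r * sin th) t) (- PI) PI)).
  { intros r th Hr. apply Hprim.
    - intros x. apply (is_derive_ext (fun t => PP (r * cos th) (r * sin th) t)).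
      intros t. symmetry. apply poisson_PP; auto.
      apply PP_derive. apply nrm_circ. apply disc_polar; auto.
    - apply PPt_cont. apply disc_polar; auto.
    - intros x _. apply poisson_pos; auto. }
  split.
  - intros r th Hr _. eexists. apply Key; auto.
  - exists (fun x y => RInt (Hfull I Phi x y) (- PI) PI). split.
    + apply Hfull_harm; auto.
    + intros r th J Hr Hth HJ.
      rewrite (integral_unique _ _ _ _ _ HJ (Key r th Hr)).
      set (x := r * cos th). set (y := r * sin th).
      set (C0 := - I / (4 * (PI * PI)) + (I / (2 * (PI * PI)) * cre 1 (x - -1) (y - 0) - 0 * cim 1 (x - -1) (y - 0))).
      rewrite (RInt_extR _ (fun t => C0 + (-1 / (2 * PI)) * (Phi t * PPt x y t))).
      2:{ intros t _. unfold Hfull, add3, Hk, H1, H2, H3, PPt, T, C0. field. lra. }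
      assert (Hex : ex_RInt (fun t => Phi t * PPt x y t) (- PI) PI).
      { apply exR. apply cont_mult; auto. apply PPt_cont. apply disc_polar; auto. }
      rewrite RInt_plusR.
      2: apply exR, cont_const.
      2: apply (ex_RInt_scal (V := R_NormedModule) _ _ _ (-1 / (2 * PI))); auto.
      rewrite RInt_scalR by auto.
      rewrite (RInt_const (V := R_CompleteNormedModule)). change (scal ?a ?b) with (a * b).
      rewrite (poisson_PP r th PI Hr). fold x y.
      unfold PP, T. rewrite cos_PI, sin_PI. unfold C0. field. lra.
Qed.
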